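(* Let $\gamma\neq0$ be real and let $V(t,x)$ be an arbitrary smooth complex-valued function. Let $Q$ be any operator in the maximal Lie invariance algebra $A^{\max}(\gamma,V)$ of the equation $i\psi_t+\psi_{xx}+|\psi|^\gamma\psi+V\psi=0$. Then there exist smooth real functions $\xi(t),\chi(t),\lambda(t)$ such that $Q=D(\xi)+G(\chi)+\lambda M$. Moreover, these functions satisfy the classifying condition $$\xi V_t+\Big(\tfrac12\xi_t x+\chi\Big)V_x+\xi_t V=\tfrac18\xi_{ttt}x^2+\tfrac12\chi_{tt}x+\lambda_t+i\tfrac{\hat\gamma}{4}\xi_{tt},$$ where $\hat\gamma=(4-\gamma)/\gamma$.
   Context: $\psi(t,x)$ is a complex unknown function. Lie symmetries are vector fields $Q=\xi^t\partial_t+\xi^x\partial_x+\eta\partial_\psi+\eta^*\partial_{\psi^*}$ on the space of $(t,x,\psi,\psi^* )$, with $\psi^*$ (complex conjugate) treated as an independent variable and all coefficients allowed to depend on $t,x,\psi,\psi^*$. $A^{\max}(\gamma,V)$ is the Lie algebra of all such vector fields generating local point symmetries of the equation. Notation: - $M=i(\psi\partial_\psi-\psi^*\partial_{\psi^*})$ and $I=\psi\partial_\psi+\psi^*\partial_{\psi^*}$. - $D(\xi)=\xi\partial_t+\tfrac12\xi_t x\partial_x+\tfrac18\xi_{tt}x^2M-\tfrac1\gamma\xi_t I$. - $G(\chi)=\chi\partial_x+\tfrac12\chi_t xM$. *)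

(* Defs.v *)
From Stdlib Require Import Reals List.
From Coquelicot Require Import Coquelicot.
Open Scope R_scope.

Definition smooth1 (f : R -> R) : Prop :=
  forall (n : nat) (t : R), ex_derive (Derive_n f n) t.

Inductive dir4 := d1 | d2 | d3 | d4.

Definition pd4 (d : dir4) (f : R -> R -> R -> R -> R) : R -> R -> R -> R -> R :=
  match d with
  | d1 => fun t x u v => Derive (fun s => f s x u v) t
  | d2 => fun t x u v => Derive (fun s => f t s u v) x
  | d3 => fun t x u v => Derive (fun s => f t x s v) u
  | d4 => fun t x u v => Derive (fun s => f t x u s) v
  end.

Definition ex_pd4 (d : dir4) (f : R -> R -> R -> R -> R) (t x u v : R) : Prop :=
  match d with
  | d1 => ex_derive (fun s => f s x u v) t
  | d2 => ex_derive (fun s => f t s u v) x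
  | d3 => ex_derive (fun s => f t x s v) u
  | d4 => ex_derive (fun s => f t x u s) v
  end.

Definition iter_pd4 (ds : list dir4) (f : R -> R -> R -> R -> R) :=
  fold_right pd4 f ds.

Definition smooth_on4 (D : R -> R -> R -> R -> Prop)
    (f : R -> R -> R -> R -> R) : Prop :=
  forall (ds : list dir4) (t x u v : R), D t x u v ->
    (forall d, ex_pd4 d (iter_pd4 ds f) t x u v) /\
    continuous (fun p : R * R * R * R =>
                  iter_pd4 ds f (fst (fst (fst p))) (snd (fst (fst p)))
                                (snd (fst p)) (snd p)) (t, x, u, v).

Definition lift2 (f : R -> R -> R) : R -> R -> R -> R -> R :=
  fun t x _ _ => f t x.

Definition smooth2 (f : R -> R -> R) : Prop :=
  smooth_on4 (fun _ _ _ _ => True) (lift2 f).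

(* ---------- Second-order jet space ----------
   psi = u + i v ; coordinates t, x, u, v and the derivatives of u, v
   up to order two. *)
Inductive coord :=
  cT | cX | cU | cV | cUt | cUx | cVt | cVx
| cUtt | cUtx | cUxx | cVtt | cVtx | cVxx.

Definition coord_eq_dec (a b : coord) : {a = b} + {a <> b}.
Proof. decide equality. Defined.

Definition jet := coord -> R.

Definition upd (j : jet) (c : coord) (s : R) : jet :=
  fun c' => if coord_eq_dec c c' then s else j c'.

Definition pd (c : coord) (F : jet -> R) (j : jet) : R :=
  Derive (fun s => F (upd j c s)) (j c).

(* total derivatives (acting on functions of at most first-order jets) *)
Definition TotDx (F : jet -> R) (j : jet) : R :=
  pd cX F j + j cUx * pd cU F j + j cVx * pd cV F j
  + j cUtx * pd cUt F j + j cUxx * pd cUx F j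
  + j cVtx * pd cVt F j + j cVxx * pd cVx F j.

Definition TotDt (F : jet -> R) (j : jet) : R :=
  pd cT F j + j cUt * pd cU F j + j cVt * pd cV F j
  + j cUtt * pd cUt F j + j cUtx * pd cUx F j
  + j cVtt * pd cVt F j + j cVtx * pd cVx F j.

Definition lift4 (f : R -> R -> R -> R -> R) : jet -> R :=
  fun j => f (j cT) (j cX) (j cU) (j cV).

(* ---------- Vector fields ----------
   Q = tau d_t + xi d_x + eta d_psi + eta^* d_psi^*, written in the real
   coordinates psi = u + i v: eta = eu + i ev, so
   Q = tau d_t + xi d_x + eu d_u + ev d_v. *)
Record vfield := VField {
  vf_t : R -> R -> R -> R -> R;
  vf_x : R -> R -> R -> R -> R;
  vf_u : R -> R -> R -> R -> R;
  vf_v : R -> R -> R -> R -> R }.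

Section Prolong.
Variable Q : vfield.
Let tau := lift4 (vf_t Q).
Let xi := lift4 (vf_x Q).

(* prolongation coefficients for a dependent variable with characteristic
   coefficient eta and jet coordinates ct (= w_t), cx (= w_x), ctx, cxx *)
Definition pr_t (eta : jet -> R) (ct cx : coord) : jet -> R :=
  fun j => TotDt eta j - j ct * TotDt tau j - j cx * TotDt xi j.
Definition pr_x (eta : jet -> R) (ct cx : coord) : jet -> R :=
  fun j => TotDx eta j - j ct * TotDx tau j - j cx * TotDx xi j.
Definition pr_xx (eta : jet -> R) (ct cx ctx cxx : coord) : jet -> R :=
  fun j => TotDx (pr_x eta ct cx) j - j ctx * TotDx tau j - j cxx * TotDx xi j.

(* second prolongation of Q applied to a function F on J^2 that does not
   depend on the coordinates u_tt, u_tx, v_tt, v_tx (the terms with these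
   coordinates vanish for such F) *)
Definition prQ (F : jet -> R) (j : jet) : R :=
  let eu := lift4 (vf_u Q) in let ev := lift4 (vf_v Q) in
  tau j * pd cT F j + xi j * pd cX F j + eu j * pd cU F j + ev j * pd cV F j
  + pr_t eu cUt cUx j * pd cUt F j + pr_x eu cUt cUx j * pd cUx F j
  + pr_t ev cVt cVx j * pd cVt F j + pr_x ev cVt cVx j * pd cVx F j
  + pr_xx eu cUt cUx cUtx cUxx j * pd cUxx F j
  + pr_xx ev cVt cVx cVtx cVxx j * pd cVxx F j.
End Prolong.

(* ---------- The equation ----------
   i psi_t + psi_xx + |psi|^gamma psi + V psi = 0, with psi = u + i v,
   V = V1 + i V2, |psi|^gamma = (u^2+v^2)^(gamma/2); real and imaginary
   parts: *)
Definition absg (gamma : R) (j : jet) : R :=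
  Rpower (j cU ^ 2 + j cV ^ 2) (gamma / 2).

Definition Delta1 (gamma : R) (V1 V2 : R -> R -> R) (j : jet) : R :=
  - j cVt + j cUxx + (absg gamma j + V1 (j cT) (j cX)) * j cU
  - V2 (j cT) (j cX) * j cV.

Definition Delta2 (gamma : R) (V1 V2 : R -> R -> R) (j : jet) : R :=
  j cUt + j cVxx + (absg gamma j + V1 (j cT) (j cX)) * j cV
  + V2 (j cT) (j cX) * j cU.

(* domain: psi <> 0 (where |psi|^gamma is smooth) *)
Definition dom4 : R -> R -> R -> R -> Prop := fun _ _ u v => 0 < u ^ 2 + v ^ 2.

Definition is_Lie_sym (gamma : R) (V1 V2 : R -> R -> R) (Q : vfield) : Prop :=
  forall j : jet, 0 < j cU ^ 2 + j cV ^ 2 ->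
    Delta1 gamma V1 V2 j = 0 -> Delta2 gamma V1 V2 j = 0 ->
    prQ Q (Delta1 gamma V1 V2) j = 0 /\ prQ Q (Delta2 gamma V1 V2) j = 0.

Definition in_Amax (gamma : R) (V1 V2 : R -> R -> R) (Q : vfield) : Prop :=
  smooth_on4 dom4 (vf_t Q) /\ smooth_on4 dom4 (vf_x Q) /\
  smooth_on4 dom4 (vf_u Q) /\ smooth_on4 dom4 (vf_v Q) /\
  is_Lie_sym gamma V1 V2 Q.

(* the vector field D(xi) + G(chi) + lambda M in real coordinates:
   eta = (i a - b) psi with a = xi''/8 x^2 + chi'/2 x + lambda, b = xi'/gamma *)
Definition DGM (gamma : R) (xi chi lam : R -> R) : vfield :=
  VField (fun t _ _ _ => xi t)
         (fun t x _ _ => / 2 * Derive_n xi 1 t * x + chi t)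
         (fun t x u v =>
            - (/ 8 * Derive_n xi 2 t * x ^ 2 + / 2 * Derive_n chi 1 t * x + lam t) * v
            - Derive_n xi 1 t / gamma * u)
         (fun t x u v =>
            (/ 8 * Derive_n xi 2 t * x ^ 2 + / 2 * Derive_n chi 1 t * x + lam t) * u
            - Derive_n xi 1 t / gamma * v).

(* Main.v *)
Require Import Defs.
From Stdlib Require Import Reals Lra List.
From Coquelicot Require Import Coquelicot.
Open Scope R_scope.

Arguments pd4 : simpl never.
Notation dT := Defs.d1.
Notation dX := Defs.d2.
Notation dU := Defs.d3.
Notation dV := Defs.d4.

Ltac us := cbv beta iota delta [upd coord_eq_dec coord_rec coord_rect sumbool_rec sumbool_rect].

Lemma Derive_cst' (a y : R) : Derive (fun _ => a) y = 0.
Proof. apply Derive_const. Qed.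

Lemma TotDx_lift f j : TotDx (lift4 f) j =
  pd4 dX f (j cT) (j cX) (j cU) (j cV) + j cUx * pd4 dU f (j cT) (j cX) (j cU) (j cV)
  + j cVx * pd4 dV f (j cT) (j cX) (j cU) (j cV).
Proof.
  unfold TotDx, pd, lift4; simpl.
  us. rewrite !Derive_cst'. cbv beta iota delta [pd4]. ring.
Qed.

Lemma TotDt_lift f j : TotDt (lift4 f) j =
  pd4 dT f (j cT) (j cX) (j cU) (j cV) + j cUt * pd4 dU f (j cT) (j cX) (j cU) (j cV)
  + j cVt * pd4 dV f (j cT) (j cX) (j cU) (j cV).
Proof.
  unfold TotDt, pd, lift4; simpl.
  us. rewrite !Derive_cst'. cbv beta iota delta [pd4]. ring.
Qed.

Definition sm (f : R -> R -> R -> R -> R) := smooth_on4 dom4 f.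

Lemma iter_app ds1 ds2 f : iter_pd4 (ds1 ++ ds2) f = iter_pd4 ds1 (iter_pd4 ds2 f).
Proof. unfold iter_pd4. apply fold_right_app. Qed.

Lemma sm_pd d f : sm f -> sm (pd4 d f).
Proof.
  intros H ds t x u v Hd. 
  change (pd4 d f) with (iter_pd4 (d :: nil) f). rewrite <- iter_app. apply H; exact Hd.
Qed.

Lemma sm_ex0 f t x u v : sm f -> 0 < u ^ 2 + v ^ 2 -> forall d, ex_pd4 d f t x u v.
Proof. intros H Hd. exact (proj1 (H nil t x u v Hd)). Qed.

Lemma exT f t x u v : (forall d, ex_pd4 d f t x u v) -> ex_derive (fun s => f s x u v) t.
Proof. intro H. exact (H dT). Qed.
Lemma exX f t x u v : (forall d, ex_pd4 d f t x u v) -> ex_derive (fun s => f t s u v) x.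
Proof. intro H. exact (H dX). Qed.
Lemma exU f t x u v : (forall d, ex_pd4 d f t x u v) -> ex_derive (fun s => f t x s v) u.
Proof. intro H. exact (H dU). Qed.
Lemma exV f t x u v : (forall d, ex_pd4 d f t x u v) -> ex_derive (fun s => f t x u s) v.
Proof. intro H. exact (H dV). Qed.

Ltac smt := match goal with |- sm (pd4 _ _) => apply sm_pd; smt | _ => assumption end.

Ltac exd := 
  match goal with
  | |- ex_derive (fun s => ?g s ?x ?u ?v) ?t => apply (exT g)
  | |- ex_derive (fun s => ?g ?t s ?u ?v) ?x => apply (exX g)
  | |- ex_derive (fun s => ?g ?t ?x s ?v) ?u => apply (exU g)
  | |- ex_derive (fun s => ?g ?t ?x ?u s) ?v => apply (exV g)
  end; apply sm_ex0; [smt | assumption].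

Lemma foldT g t x u v : Derive (fun s => g s x u v) t = pd4 dT g t x u v.
Proof. reflexivity. Qed.
Lemma foldX g t x u v : Derive (fun s => g t s u v) x = pd4 dX g t x u v.
Proof. reflexivity. Qed.
Lemma foldU g t x u v : Derive (fun s => g t x s v) u = pd4 dU g t x u v.
Proof. reflexivity. Qed.
Lemma foldV g t x u v : Derive (fun s => g t x u s) v = pd4 dV g t x u v.
Proof. reflexivity. Qed.

Ltac folds := rewrite ?foldT, ?foldX, ?foldU, ?foldV.

Notation "f @@ j" := (f (j cT) (j cX) (j cU) (j cV)) (at level 10).

Lemma prxU Q e j : pr_x Q (lift4 e) cUt cUx j =
  (pd4 dX e @@ j + j cUx * pd4 dU e @@ j + j cVx * pd4 dV e @@ j)
  - j cUt * (pd4 dX (vf_t Q) @@ j + j cUx * pd4 dU (vf_t Q) @@ j + j cVx * pd4 dV (vf_t Q) @@ j)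
  - j cUx * (pd4 dX (vf_x Q) @@ j + j cUx * pd4 dU (vf_x Q) @@ j + j cVx * pd4 dV (vf_x Q) @@ j).
Proof. unfold pr_x. rewrite !TotDx_lift. reflexivity. Qed.

Lemma prxV Q e j : pr_x Q (lift4 e) cVt cVx j =
  (pd4 dX e @@ j + j cUx * pd4 dU e @@ j + j cVx * pd4 dV e @@ j)
  - j cVt * (pd4 dX (vf_t Q) @@ j + j cUx * pd4 dU (vf_t Q) @@ j + j cVx * pd4 dV (vf_t Q) @@ j)
  - j cVx * (pd4 dX (vf_x Q) @@ j + j cUx * pd4 dU (vf_x Q) @@ j + j cVx * pd4 dV (vf_x Q) @@ j).
Proof. unfold pr_x. rewrite !TotDx_lift. reflexivity. Qed.

Lemma prtU Q e j : pr_t Q (lift4 e) cUt cUx j =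
  (pd4 dT e @@ j + j cUt * pd4 dU e @@ j + j cVt * pd4 dV e @@ j)
  - j cUt * (pd4 dT (vf_t Q) @@ j + j cUt * pd4 dU (vf_t Q) @@ j + j cVt * pd4 dV (vf_t Q) @@ j)
  - j cUx * (pd4 dT (vf_x Q) @@ j + j cUt * pd4 dU (vf_x Q) @@ j + j cVt * pd4 dV (vf_x Q) @@ j).
Proof. unfold pr_t. rewrite !TotDt_lift. reflexivity. Qed.

Lemma prtV Q e j : pr_t Q (lift4 e) cVt cVx j =
  (pd4 dT e @@ j + j cUt * pd4 dU e @@ j + j cVt * pd4 dV e @@ j)
  - j cVt * (pd4 dT (vf_t Q) @@ j + j cUt * pd4 dU (vf_t Q) @@ j + j cVt * pd4 dV (vf_t Q) @@ j)
  - j cVx * (pd4 dT (vf_x Q) @@ j + j cUt * pd4 dU (vf_x Q) @@ j + j cVt * pd4 dV (vf_x Q) @@ j).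
Proof. unfold pr_t. rewrite !TotDt_lift. reflexivity. Qed.

Ltac solve_pd L c := unfold pd;
  match goal with |- Derive (fun s => ?F (upd ?j c s)) _ = _ =>
    rewrite (Derive_ext _ _ _ (fun s => L (upd j c s))) end; us;
  apply is_derive_unique; auto_derive;
  try (repeat match goal with |- _ /\ _ => split end; try exact I; exd); folds; ring.

Lemma pdcX_prxU Q e j : sm e -> sm (vf_t Q) -> sm (vf_x Q) -> 0 < j cU ^ 2 + j cV ^ 2 ->
  pd cX (pr_x Q (lift4 e) cUt cUx) j = (pd4 dX (pd4 dX e) @@ j + j cUx * pd4 dX (pd4 dU e) @@ j + j cVx * pd4 dX (pd4 dV e) @@ j - j cUt * (pd4 dX (pd4 dX (vf_t Q)) @@ j + j cUx * pd4 dX (pd4 dU (vf_t Q)) @@ j + j cVx * pd4 dX (pd4 dV (vf_t Q)) @@ j) - j cUx * (pd4 dX (pd4 dX (vf_x Q)) @@ j + j cUx * pd4 dX (pd4 dU (vf_x Q)) @@ j + j cVx * pd4 dX (pd4 dV (vf_x Q)) @@ j)).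
Proof. intros. solve_pd (prxU Q e) cX. Qed.

Lemma pdcU_prxU Q e j : sm e -> sm (vf_t Q) -> sm (vf_x Q) -> 0 < j cU ^ 2 + j cV ^ 2 ->
  pd cU (pr_x Q (lift4 e) cUt cUx) j = (pd4 dU (pd4 dX e) @@ j + j cUx * pd4 dU (pd4 dU e) @@ j + j cVx * pd4 dU (pd4 dV e) @@ j - j cUt * (pd4 dU (pd4 dX (vf_t Q)) @@ j + j cUx * pd4 dU (pd4 dU (vf_t Q)) @@ j + j cVx * pd4 dU (pd4 dV (vf_t Q)) @@ j) - j cUx * (pd4 dU (pd4 dX (vf_x Q)) @@ j + j cUx * pd4 dU (pd4 dU (vf_x Q)) @@ j + j cVx * pd4 dU (pd4 dV (vf_x Q)) @@ j)).
Proof. intros. solve_pd (prxU Q e) cU. Qed.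

Lemma pdcV_prxU Q e j : sm e -> sm (vf_t Q) -> sm (vf_x Q) -> 0 < j cU ^ 2 + j cV ^ 2 ->
  pd cV (pr_x Q (lift4 e) cUt cUx) j = (pd4 dV (pd4 dX e) @@ j + j cUx * pd4 dV (pd4 dU e) @@ j + j cVx * pd4 dV (pd4 dV e) @@ j - j cUt * (pd4 dV (pd4 dX (vf_t Q)) @@ j + j cUx * pd4 dV (pd4 dU (vf_t Q)) @@ j + j cVx * pd4 dV (pd4 dV (vf_t Q)) @@ j) - j cUx * (pd4 dV (pd4 dX (vf_x Q)) @@ j + j cUx * pd4 dV (pd4 dU (vf_x Q)) @@ j + j cVx * pd4 dV (pd4 dV (vf_x Q)) @@ j)).
Proof. intros. solve_pd (prxU Q e) cV. Qed.

Lemma pdcUt_prxU Q e j :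
  pd cUt (pr_x Q (lift4 e) cUt cUx) j = (- (pd4 dX (vf_t Q) @@ j + j cUx * pd4 dU (vf_t Q) @@ j + j cVx * pd4 dV (vf_t Q) @@ j)).
Proof. solve_pd (prxU Q e) cUt. Qed.

Lemma pdcUx_prxU Q e j :
  pd cUx (pr_x Q (lift4 e) cUt cUx) j = (pd4 dU e @@ j - j cUt * pd4 dU (vf_t Q) @@ j - (pd4 dX (vf_x Q) @@ j + 2 * j cUx * pd4 dU (vf_x Q) @@ j + j cVx * pd4 dV (vf_x Q) @@ j)).
Proof. solve_pd (prxU Q e) cUx. Qed.

Lemma pdcVt_prxU Q e j :
  pd cVt (pr_x Q (lift4 e) cUt cUx) j = 0.
Proof. solve_pd (prxU Q e) cVt. Qed.

Lemma pdcVx_prxU Q e j :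
  pd cVx (pr_x Q (lift4 e) cUt cUx) j = (pd4 dV e @@ j - j cUt * pd4 dV (vf_t Q) @@ j - j cUx * pd4 dV (vf_x Q) @@ j).
Proof. solve_pd (prxU Q e) cVx. Qed.

Lemma TotDx_prxU Q e j : sm e -> sm (vf_t Q) -> sm (vf_x Q) -> 0 < j cU ^ 2 + j cV ^ 2 ->
  TotDx (pr_x Q (lift4 e) cUt cUx) j = (pd4 dX (pd4 dX e) @@ j + j cUx * pd4 dX (pd4 dU e) @@ j + j cVx * pd4 dX (pd4 dV e) @@ j - j cUt * (pd4 dX (pd4 dX (vf_t Q)) @@ j + j cUx * pd4 dX (pd4 dU (vf_t Q)) @@ j + j cVx * pd4 dX (pd4 dV (vf_t Q)) @@ j) - j cUx * (pd4 dX (pd4 dX (vf_x Q)) @@ j + j cUx * pd4 dX (pd4 dU (vf_x Q)) @@ j + j cVx * pd4 dX (pd4 dV (vf_x Q)) @@ j)) + j cUx * (pd4 dU (pd4 dX e) @@ j + j cUx * pd4 dU (pd4 dU e) @@ j + j cVx * pd4 dU (pd4 dV e) @@ j - j cUt * (pd4 dU (pd4 dX (vf_t Q)) @@ j + j cUx * pd4 dU (pd4 dU (vf_t Q)) @@ j + j cVx * pd4 dU (pd4 dV (vf_t Q)) @@ j) - j cUx * (pd4 dU (pd4 dX (vf_x Q)) @@ j + j cUx * pd4 dU (pd4 dU (vf_x Q)) @@ j + j cVx * pd4 dU (pd4 dV (vf_x Q)) @@ j)) + j cVx * (pd4 dV (pd4 dX e) @@ j + j cUx * pd4 dV (pd4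 dU e) @@ j + j cVx * pd4 dV (pd4 dV e) @@ j - j cUt * (pd4 dV (pd4 dX (vf_t Q)) @@ j + j cUx * pd4 dV (pd4 dU (vf_t Q)) @@ j + j cVx * pd4 dV (pd4 dV (vf_t Q)) @@ j) - j cUx * (pd4 dV (pd4 dX (vf_x Q)) @@ j + j cUx * pd4 dV (pd4 dU (vf_x Q)) @@ j + j cVx * pd4 dV (pd4 dV (vf_x Q)) @@ j)) + j cUtx * (- (pd4 dX (vf_t Q) @@ j + j cUx * pd4 dU (vf_t Q) @@ j + j cVx * pd4 dV (vf_t Q) @@ j)) + j cUxx * (pd4 dU e @@ j - j cUt * pd4 dU (vf_t Q) @@ j - (pd4 dX (vf_x Q) @@ j + 2 * j cUx * pd4 dU (vf_x Q) @@ j + j cVx * pd4 dV (vf_x Q) @@ j)) + j cVtx * 0 + j cVxx * (pd4 dV e @@ j - j cUt * pd4 dV (vf_t Q) @@ j - j cUx * pd4 dV (vf_x Q) @@ j).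
Proof. intros. unfold TotDx. rewrite pdcX_prxU, pdcU_prxU, pdcV_prxU, pdcUt_prxU, pdcUx_prxU, pdcVt_prxU, pdcVx_prxU by assumption. reflexivity. Qed.

Lemma pdcX_prxV Q e j : sm e -> sm (vf_t Q) -> sm (vf_x Q) -> 0 < j cU ^ 2 + j cV ^ 2 ->
  pd cX (pr_x Q (lift4 e) cVt cVx) j = (pd4 dX (pd4 dX e) @@ j + j cUx * pd4 dX (pd4 dU e) @@ j + j cVx * pd4 dX (pd4 dV e) @@ j - j cVt * (pd4 dX (pd4 dX (vf_t Q)) @@ j + j cUx * pd4 dX (pd4 dU (vf_t Q)) @@ j + j cVx * pd4 dX (pd4 dV (vf_t Q)) @@ j) - j cVx * (pd4 dX (pd4 dX (vf_x Q)) @@ j + j cUx * pd4 dX (pd4 dU (vf_x Q)) @@ j + j cVx * pd4 dX (pd4 dV (vf_x Q)) @@ j)).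
Proof. intros. solve_pd (prxV Q e) cX. Qed.

Lemma pdcU_prxV Q e j : sm e -> sm (vf_t Q) -> sm (vf_x Q) -> 0 < j cU ^ 2 + j cV ^ 2 ->
  pd cU (pr_x Q (lift4 e) cVt cVx) j = (pd4 dU (pd4 dX e) @@ j + j cUx * pd4 dU (pd4 dU e) @@ j + j cVx * pd4 dU (pd4 dV e) @@ j - j cVt * (pd4 dU (pd4 dX (vf_t Q)) @@ j + j cUx * pd4 dU (pd4 dU (vf_t Q)) @@ j + j cVx * pd4 dU (pd4 dV (vf_t Q)) @@ j) - j cVx * (pd4 dU (pd4 dX (vf_x Q)) @@ j + j cUx * pd4 dU (pd4 dU (vf_x Q)) @@ j + j cVx * pd4 dU (pd4 dV (vf_x Q)) @@ j)).
Proof. intros. solve_pd (prxV Q e) cU. Qed.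

Lemma pdcV_prxV Q e j : sm e -> sm (vf_t Q) -> sm (vf_x Q) -> 0 < j cU ^ 2 + j cV ^ 2 ->
  pd cV (pr_x Q (lift4 e) cVt cVx) j = (pd4 dV (pd4 dX e) @@ j + j cUx * pd4 dV (pd4 dU e) @@ j + j cVx * pd4 dV (pd4 dV e) @@ j - j cVt * (pd4 dV (pd4 dX (vf_t Q)) @@ j + j cUx * pd4 dV (pd4 dU (vf_t Q)) @@ j + j cVx * pd4 dV (pd4 dV (vf_t Q)) @@ j) - j cVx * (pd4 dV (pd4 dX (vf_x Q)) @@ j + j cUx * pd4 dV (pd4 dU (vf_x Q)) @@ j + j cVx * pd4 dV (pd4 dV (vf_x Q)) @@ j)).
Proof. intros. solve_pd (prxV Q e) cV. Qed.

Lemma pdcUt_prxV Q e j :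
  pd cUt (pr_x Q (lift4 e) cVt cVx) j = 0.
Proof. solve_pd (prxV Q e) cUt. Qed.

Lemma pdcUx_prxV Q e j :
  pd cUx (pr_x Q (lift4 e) cVt cVx) j = (pd4 dU e @@ j - j cVt * pd4 dU (vf_t Q) @@ j - j cVx * pd4 dU (vf_x Q) @@ j).
Proof. solve_pd (prxV Q e) cUx. Qed.

Lemma pdcVt_prxV Q e j :
  pd cVt (pr_x Q (lift4 e) cVt cVx) j = (- (pd4 dX (vf_t Q) @@ j + j cUx * pd4 dU (vf_t Q) @@ j + j cVx * pd4 dV (vf_t Q) @@ j)).
Proof. solve_pd (prxV Q e) cVt. Qed.

Lemma pdcVx_prxV Q e j :
  pd cVx (pr_x Q (lift4 e) cVt cVx) j = (pd4 dV e @@ j - j cVt * pd4 dV (vf_t Q) @@ j - (pd4 dX (vf_x Q) @@ j + j cUx * pd4 dU (vf_x Q) @@ j + 2 * j cVx * pd4 dV (vf_x Q) @@ j)).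
Proof. solve_pd (prxV Q e) cVx. Qed.

Lemma TotDx_prxV Q e j : sm e -> sm (vf_t Q) -> sm (vf_x Q) -> 0 < j cU ^ 2 + j cV ^ 2 ->
  TotDx (pr_x Q (lift4 e) cVt cVx) j = (pd4 dX (pd4 dX e) @@ j + j cUx * pd4 dX (pd4 dU e) @@ j + j cVx * pd4 dX (pd4 dV e) @@ j - j cVt * (pd4 dX (pd4 dX (vf_t Q)) @@ j + j cUx * pd4 dX (pd4 dU (vf_t Q)) @@ j + j cVx * pd4 dX (pd4 dV (vf_t Q)) @@ j) - j cVx * (pd4 dX (pd4 dX (vf_x Q)) @@ j + j cUx * pd4 dX (pd4 dU (vf_x Q)) @@ j + j cVx * pd4 dX (pd4 dV (vf_x Q)) @@ j)) + j cUx * (pd4 dU (pd4 dX e) @@ j + j cUx * pd4 dU (pd4 dU e) @@ j + j cVx * pd4 dU (pd4 dV e) @@ j - j cVt * (pd4 dU (pd4 dX (vf_t Q)) @@ j + j cUx * pd4 dU (pd4 dU (vf_t Q)) @@ j + j cVx * pd4 dU (pd4 dV (vf_t Q)) @@ j) - j cVx * (pd4 dU (pd4 dX (vf_x Q)) @@ j + j cUx * pd4 dU (pd4 dU (vf_x Q)) @@ j + j cVx * pd4 dU (pd4 dV (vf_x Q)) @@ j)) + j cVx * (pd4 dV (pd4 dX e) @@ j + j cUx * pd4 dV (pd4 dU e) @@ j + j cVx * pd4 dV (pd4 dV e) @@ j - j cVt * (pd4 dV (pd4 dX (vf_t Q)) @@ j + j cUx * pd4 dV (pd4 dU (vf_t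 Q)) @@ j + j cVx * pd4 dV (pd4 dV (vf_t Q)) @@ j) - j cVx * (pd4 dV (pd4 dX (vf_x Q)) @@ j + j cUx * pd4 dV (pd4 dU (vf_x Q)) @@ j + j cVx * pd4 dV (pd4 dV (vf_x Q)) @@ j)) + j cUtx * 0 + j cUxx * (pd4 dU e @@ j - j cVt * pd4 dU (vf_t Q) @@ j - j cVx * pd4 dU (vf_x Q) @@ j) + j cVtx * (- (pd4 dX (vf_t Q) @@ j + j cUx * pd4 dU (vf_t Q) @@ j + j cVx * pd4 dV (vf_t Q) @@ j)) + j cVxx * (pd4 dV e @@ j - j cVt * pd4 dV (vf_t Q) @@ j - (pd4 dX (vf_x Q) @@ j + j cUx * pd4 dU (vf_x Q) @@ j + 2 * j cVx * pd4 dV (vf_x Q) @@ j)).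
Proof. intros. unfold TotDx. rewrite pdcX_prxV, pdcU_prxV, pdcV_prxV, pdcUt_prxV, pdcUx_prxV, pdcVt_prxV, pdcVx_prxV by assumption. reflexivity. Qed.


Lemma sm2T V t x : smooth2 V -> ex_derive (fun s => V s x) t.
Proof. intro H. exact (proj1 (H nil t x 0 0 I) Defs.d1). Qed.
Lemma sm2X V t x : smooth2 V -> ex_derive (fun s => V t s) x.
Proof. intro H. exact (proj1 (H nil t x 0 0 I) Defs.d2). Qed.

Ltac post := repeat match goal with |- _ /\ _ => split end; try exact I;
  try match goal with
      | |- ex_derive (fun s => ?V s ?x) ?t => apply (sm2T V t x); assumption
      | |- ex_derive (fun s => ?V ?t s) ?x => apply (sm2X V t x); assumption end;
  repeat match goal with |- context [?a * (?a * 1)] => replace (a * (a * 1)) with (a ^ 2) by ring end;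
  try lra; try ring; try (field; lra).
Ltac solve_pdD := unfold pd, Delta1, Delta2, absg; us; unfold Rpower; apply is_derive_unique; auto_derive; post.

Lemma pdcT_D1 gamma V1 V2 j : smooth2 V1 -> smooth2 V2 -> 0 < j cU ^ 2 + j cV ^ 2 ->
  pd cT (Delta1 gamma V1 V2) j = Derive (fun s => V1 s (j cX)) (j cT) * j cU - Derive (fun s => V2 s (j cX)) (j cT) * j cV.
Proof. intros. solve_pdD. Qed.

Lemma pdcX_D1 gamma V1 V2 j : smooth2 V1 -> smooth2 V2 -> 0 < j cU ^ 2 + j cV ^ 2 ->
  pd cX (Delta1 gamma V1 V2) j = Derive (fun s => V1 (j cT) s) (j cX) * j cU - Derive (fun s => V2 (j cT) s) (j cX) * j cV.
Proof. intros. solve_pdD. Qed.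

Lemma pdcU_D1 gamma V1 V2 j : smooth2 V1 -> smooth2 V2 -> 0 < j cU ^ 2 + j cV ^ 2 ->
  pd cU (Delta1 gamma V1 V2) j = absg gamma j + gamma * j cU ^ 2 * absg gamma j / (j cU ^ 2 + j cV ^ 2) + V1 (j cT) (j cX).
Proof. intros. solve_pdD. Qed.

Lemma pdcV_D1 gamma V1 V2 j : smooth2 V1 -> smooth2 V2 -> 0 < j cU ^ 2 + j cV ^ 2 ->
  pd cV (Delta1 gamma V1 V2) j = gamma * j cU * j cV * absg gamma j / (j cU ^ 2 + j cV ^ 2) - V2 (j cT) (j cX).
Proof. intros. solve_pdD. Qed.

Lemma pdcUt_D1 gamma V1 V2 j : smooth2 V1 -> smooth2 V2 -> 0 < j cU ^ 2 + j cV ^ 2 ->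
  pd cUt (Delta1 gamma V1 V2) j = 0.
Proof. intros. solve_pdD. Qed.

Lemma pdcUx_D1 gamma V1 V2 j : smooth2 V1 -> smooth2 V2 -> 0 < j cU ^ 2 + j cV ^ 2 ->
  pd cUx (Delta1 gamma V1 V2) j = 0.
Proof. intros. solve_pdD. Qed.

Lemma pdcVt_D1 gamma V1 V2 j : smooth2 V1 -> smooth2 V2 -> 0 < j cU ^ 2 + j cV ^ 2 ->
  pd cVt (Delta1 gamma V1 V2) j = -1.
Proof. intros. solve_pdD. Qed.

Lemma pdcVx_D1 gamma V1 V2 j : smooth2 V1 -> smooth2 V2 -> 0 < j cU ^ 2 + j cV ^ 2 ->
  pd cVx (Delta1 gamma V1 V2) j = 0.
Proof. intros. solve_pdD. Qed.

Lemma pdcUxx_D1 gamma V1 V2 j : smooth2 V1 -> smooth2 V2 -> 0 < j cU ^ 2 + j cV ^ 2 ->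
  pd cUxx (Delta1 gamma V1 V2) j = 1.
Proof. intros. solve_pdD. Qed.

Lemma pdcVxx_D1 gamma V1 V2 j : smooth2 V1 -> smooth2 V2 -> 0 < j cU ^ 2 + j cV ^ 2 ->
  pd cVxx (Delta1 gamma V1 V2) j = 0.
Proof. intros. solve_pdD. Qed.

Lemma pdcT_D2 gamma V1 V2 j : smooth2 V1 -> smooth2 V2 -> 0 < j cU ^ 2 + j cV ^ 2 ->
  pd cT (Delta2 gamma V1 V2) j = Derive (fun s => V1 s (j cX)) (j cT) * j cV + Derive (fun s => V2 s (j cX)) (j cT) * j cU.
Proof. intros. solve_pdD. Qed.

Lemma pdcX_D2 gamma V1 V2 j : smooth2 V1 -> smooth2 V2 -> 0 < j cU ^ 2 + j cV ^ 2 ->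
  pd cX (Delta2 gamma V1 V2) j = Derive (fun s => V1 (j cT) s) (j cX) * j cV + Derive (fun s => V2 (j cT) s) (j cX) * j cU.
Proof. intros. solve_pdD. Qed.

Lemma pdcU_D2 gamma V1 V2 j : smooth2 V1 -> smooth2 V2 -> 0 < j cU ^ 2 + j cV ^ 2 ->
  pd cU (Delta2 gamma V1 V2) j = gamma * j cU * j cV * absg gamma j / (j cU ^ 2 + j cV ^ 2) + V2 (j cT) (j cX).
Proof. intros. solve_pdD. Qed.

Lemma pdcV_D2 gamma V1 V2 j : smooth2 V1 -> smooth2 V2 -> 0 < j cU ^ 2 + j cV ^ 2 ->
  pd cV (Delta2 gamma V1 V2) j = absg gamma j + gamma * j cV ^ 2 * absg gamma j / (j cU ^ 2 + j cV ^ 2) + V1 (j cT) (j cX).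
Proof. intros. solve_pdD. Qed.

Lemma pdcUt_D2 gamma V1 V2 j : smooth2 V1 -> smooth2 V2 -> 0 < j cU ^ 2 + j cV ^ 2 ->
  pd cUt (Delta2 gamma V1 V2) j = 1.
Proof. intros. solve_pdD. Qed.

Lemma pdcUx_D2 gamma V1 V2 j : smooth2 V1 -> smooth2 V2 -> 0 < j cU ^ 2 + j cV ^ 2 ->
  pd cUx (Delta2 gamma V1 V2) j = 0.
Proof. intros. solve_pdD. Qed.

Lemma pdcVt_D2 gamma V1 V2 j : smooth2 V1 -> smooth2 V2 -> 0 < j cU ^ 2 + j cV ^ 2 ->
  pd cVt (Delta2 gamma V1 V2) j = 0.
Proof. intros. solve_pdD. Qed.

Lemma pdcVx_D2 gamma V1 V2 j : smooth2 V1 -> smooth2 V2 -> 0 < j cU ^ 2 + j cV ^ 2 ->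
  pd cVx (Delta2 gamma V1 V2) j = 0.
Proof. intros. solve_pdD. Qed.

Lemma pdcUxx_D2 gamma V1 V2 j : smooth2 V1 -> smooth2 V2 -> 0 < j cU ^ 2 + j cV ^ 2 ->
  pd cUxx (Delta2 gamma V1 V2) j = 0.
Proof. intros. solve_pdD. Qed.

Lemma pdcVxx_D2 gamma V1 V2 j : smooth2 V1 -> smooth2 V2 -> 0 < j cU ^ 2 + j cV ^ 2 ->
  pd cVxx (Delta2 gamma V1 V2) j = 1.
Proof. intros. solve_pdD. Qed.
Definition Jt (Q : vfield) (gamma : R) (V1 V2 : R -> R -> R) (t x u v p q P Qq r s : R) : jet :=
  fun c => match c with cT => t | cX => x | cU => u | cV => v | cUt => (- Qq - (Rpower (u ^ 2 + v ^ 2) (gamma / 2) + V1 t x) * v - V2 t x * u) | cVt => (P + (Rpower (u ^ 2 + v ^ 2) (gamma / 2) + V1 t x) * u - V2 t x * v)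
  | cUx => p | cVx => q | cUtx => r | cVtx => s | cUxx => P | cVxx => Qq | cUtt => 0 | cVtt => 0 end.

Definition E1f (Q : vfield) (gamma : R) (V1 V2 : R -> R -> R) (t x u v p q P Qq r s : R) : R :=
  (vf_t Q) t x u v * (Derive (fun s0 => V1 s0 x) t * u - Derive (fun s0 => V2 s0 x) t * v) + (vf_x Q) t x u v * (Derive (fun s0 => V1 t s0) x * u - Derive (fun s0 => V2 t s0) x * v) + (vf_u Q) t x u v * (Rpower (u ^ 2 + v ^ 2) (gamma / 2) + gamma * u ^ 2 * Rpower (u ^ 2 + v ^ 2) (gamma / 2) / (u ^ 2 + v ^ 2) + V1 t x) + (vf_v Q) t x u v * (gamma * u * v * Rpower (u ^ 2 + v ^ 2) (gamma / 2) / (u ^ 2 + v ^ 2) - V2 t x) + ((pd4 dT (vf_u Q) t x u v + (- Qq - (Rpower (u ^ 2 + v ^ 2) (gamma / 2) + V1 t x) * v - V2 t x * u) * pd4 dU (vf_u Q) t x u v + (P + (Rpower (u ^ 2 + v ^ 2) (gamma / 2) + V1 t x) * u - V2 t x * v) * pd4 dV (vf_u Q) t x u v) - (- Qq - (Rpower (u ^ 2 + v ^ 2) (gamma / 2) + V1 t x) * v - V2 t x * u) * (pd4 dT (vf_t Q) t x u v + (- Qq - (Rpower (u ^ 2 + v ^ 2) (gamma / 2) + V1 t x) * v - V2 t x * u) * pd4 dU (vf_t Q) t x u v + (P + (Rpower (u ^ 2 + v ^ 2) (gamma / 2) + V1 t x) * u - V2 t x * v) * pd4 dV (vf_t Q)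 t x u v) - p * (pd4 dT (vf_x Q) t x u v + (- Qq - (Rpower (u ^ 2 + v ^ 2) (gamma / 2) + V1 t x) * v - V2 t x * u) * pd4 dU (vf_x Q) t x u v + (P + (Rpower (u ^ 2 + v ^ 2) (gamma / 2) + V1 t x) * u - V2 t x * v) * pd4 dV (vf_x Q) t x u v)) * 0 + ((pd4 dX (vf_u Q) t x u v + p * pd4 dU (vf_u Q) t x u v + q * pd4 dV (vf_u Q) t x u v) - (- Qq - (Rpower (u ^ 2 + v ^ 2) (gamma / 2) + V1 t x) * v - V2 t x * u) * (pd4 dX (vf_t Q) t x u v + p * pd4 dU (vf_t Q) t x u v + q * pd4 dV (vf_t Q) t x u v) - p * (pd4 dX (vf_x Q) t x u v + p * pd4 dU (vf_x Q) t x u v + q * pd4 dV (vf_x Q) t x u v)) * 0 + ((pd4 dT (vf_v Q) t x u v + (- Qq - (Rpower (u ^ 2 + v ^ 2) (gamma / 2) + V1 t x) * v - V2 t x * u) * pd4 dU (vf_v Q) t x u v + (P + (Rpower (u ^ 2 + v ^ 2) (gamma / 2) + V1 t x) * u - V2 t x * v) * pd4 dV (vf_v Q) t x u v) - (P + (Rpower (u ^ 2 + v ^ 2) (gamma / 2) + V1 t x) * u - V2 t x * v) * (pd4 dT (vf_t Q) t x u v + (- Qq - (Rpower (u ^ 2 + v ^ 2) (gamma / 2) + V1 t x) * v - V2 t x * u) * pd4 dU (vf_t Q) t x u v + (P + (Rpower (u ^ 2 + v ^ 2) (gamma / 2) + V1 t x) * u - V2 t x * v) * pd4 dV (vf_t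 Q) t x u v) - q * (pd4 dT (vf_x Q) t x u v + (- Qq - (Rpower (u ^ 2 + v ^ 2) (gamma / 2) + V1 t x) * v - V2 t x * u) * pd4 dU (vf_x Q) t x u v + (P + (Rpower (u ^ 2 + v ^ 2) (gamma / 2) + V1 t x) * u - V2 t x * v) * pd4 dV (vf_x Q) t x u v)) * (-1) + ((pd4 dX (vf_v Q) t x u v + p * pd4 dU (vf_v Q) t x u v + q * pd4 dV (vf_v Q) t x u v) - (P + (Rpower (u ^ 2 + v ^ 2) (gamma / 2) + V1 t x) * u - V2 t x * v) * (pd4 dX (vf_t Q) t x u v + p * pd4 dU (vf_t Q) t x u v + q * pd4 dV (vf_t Q) t x u v) - q * (pd4 dX (vf_x Q) t x u v + p * pd4 dU (vf_x Q) t x u v + q * pd4 dV (vf_x Q) t x u v)) * 0 + (((pd4 dX (pd4 dX (vf_u Q)) t x u v + p * pd4 dX (pd4 dU (vf_u Q)) t x u v + q * pd4 dX (pd4 dV (vf_u Q)) t x u v - (- Qq - (Rpower (u ^ 2 + v ^ 2) (gamma / 2) + V1 t x) * v - V2 t x * u) * (pd4 dX (pd4 dX (vf_t Q)) t x u v + p * pd4 dX (pd4 dU (vf_t Q)) t x u v + q * pd4 dX (pd4 dV (vf_t Q)) t x u v) - p * (pd4 dX (pd4 dX (vf_x Q)) t x u v + p * pd4 dX (pd4 dU (vf_x Q)) t x u v + q * pd4 dX (pd4 dV (vf_x Q)) t x u v)) + p * (pd4 dU (pd4 dX (vf_u Q)) t x u v + p * pd4 dU (pd4 dU (vf_u Q))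 t x u v + q * pd4 dU (pd4 dV (vf_u Q)) t x u v - (- Qq - (Rpower (u ^ 2 + v ^ 2) (gamma / 2) + V1 t x) * v - V2 t x * u) * (pd4 dU (pd4 dX (vf_t Q)) t x u v + p * pd4 dU (pd4 dU (vf_t Q)) t x u v + q * pd4 dU (pd4 dV (vf_t Q)) t x u v) - p * (pd4 dU (pd4 dX (vf_x Q)) t x u v + p * pd4 dU (pd4 dU (vf_x Q)) t x u v + q * pd4 dU (pd4 dV (vf_x Q)) t x u v)) + q * (pd4 dV (pd4 dX (vf_u Q)) t x u v + p * pd4 dV (pd4 dU (vf_u Q)) t x u v + q * pd4 dV (pd4 dV (vf_u Q)) t x u v - (- Qq - (Rpower (u ^ 2 + v ^ 2) (gamma / 2) + V1 t x) * v - V2 t x * u) * (pd4 dV (pd4 dX (vf_t Q)) t x u v + p * pd4 dV (pd4 dU (vf_t Q)) t x u v + q * pd4 dV (pd4 dV (vf_t Q)) t x u v) - p * (pd4 dV (pd4 dX (vf_x Q)) t x u v + p * pd4 dV (pd4 dU (vf_x Q)) t x u v + q * pd4 dV (pd4 dV (vf_x Q)) t x u v)) + r * (- (pd4 dX (vf_t Q) t x u v + p * pd4 dU (vf_t Q) t x u v + q * pd4 dV (vf_t Q) t x u v)) + P * (pd4 dU (vf_u Q) t x u v - (- Qq - (Rpower (u ^ 2 + v ^ 2) (gamma / 2) + V1 t x) * v - V2 t x * u) * pd4 dU (vf_t Q) t x u v - (pd4 dX (vf_x Q) t x u v + 2 * p * pd4 dU (vf_x Q) t x u v + q * pd4 dV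 (vf_x Q) t x u v)) + s * 0 + Qq * (pd4 dV (vf_u Q) t x u v - (- Qq - (Rpower (u ^ 2 + v ^ 2) (gamma / 2) + V1 t x) * v - V2 t x * u) * pd4 dV (vf_t Q) t x u v - p * pd4 dV (vf_x Q) t x u v)) - r * (pd4 dX (vf_t Q) t x u v + p * pd4 dU (vf_t Q) t x u v + q * pd4 dV (vf_t Q) t x u v) - P * (pd4 dX (vf_x Q) t x u v + p * pd4 dU (vf_x Q) t x u v + q * pd4 dV (vf_x Q) t x u v)) * 1 + (((pd4 dX (pd4 dX (vf_v Q)) t x u v + p * pd4 dX (pd4 dU (vf_v Q)) t x u v + q * pd4 dX (pd4 dV (vf_v Q)) t x u v - (P + (Rpower (u ^ 2 + v ^ 2) (gamma / 2) + V1 t x) * u - V2 t x * v) * (pd4 dX (pd4 dX (vf_t Q)) t x u v + p * pd4 dX (pd4 dU (vf_t Q)) t x u v + q * pd4 dX (pd4 dV (vf_t Q)) t x u v) - q * (pd4 dX (pd4 dX (vf_x Q)) t x u v + p * pd4 dX (pd4 dU (vf_x Q)) t x u v + q * pd4 dX (pd4 dV (vf_x Q)) t x u v)) + p * (pd4 dU (pd4 dX (vf_v Q)) t x u v + p * pd4 dU (pd4 dU (vf_v Q)) t x u v + q * pd4 dU (pd4 dV (vf_v Q)) t x u v - (P + (Rpower (u ^ 2 + v ^ 2) (gamma / 2) + V1 t x) * u - V2 t x * v) * (pd4 dU (pd4 dX (vf_t Q)) t x u v + p * pd4 dU (pd4 dU (vf_t Q)) t x u v + q * pd4 dU (pd4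 dV (vf_t Q)) t x u v) - q * (pd4 dU (pd4 dX (vf_x Q)) t x u v + p * pd4 dU (pd4 dU (vf_x Q)) t x u v + q * pd4 dU (pd4 dV (vf_x Q)) t x u v)) + q * (pd4 dV (pd4 dX (vf_v Q)) t x u v + p * pd4 dV (pd4 dU (vf_v Q)) t x u v + q * pd4 dV (pd4 dV (vf_v Q)) t x u v - (P + (Rpower (u ^ 2 + v ^ 2) (gamma / 2) + V1 t x) * u - V2 t x * v) * (pd4 dV (pd4 dX (vf_t Q)) t x u v + p * pd4 dV (pd4 dU (vf_t Q)) t x u v + q * pd4 dV (pd4 dV (vf_t Q)) t x u v) - q * (pd4 dV (pd4 dX (vf_x Q)) t x u v + p * pd4 dV (pd4 dU (vf_x Q)) t x u v + q * pd4 dV (pd4 dV (vf_x Q)) t x u v)) + r * 0 + P * (pd4 dU (vf_v Q) t x u v - (P + (Rpower (u ^ 2 + v ^ 2) (gamma / 2) + V1 t x) * u - V2 t x * v) * pd4 dU (vf_t Q) t x u v - q * pd4 dU (vf_x Q) t x u v) + s * (- (pd4 dX (vf_t Q) t x u v + p * pd4 dU (vf_t Q) t x u v + q * pd4 dV (vf_t Q) t x u v)) + Qq * (pd4 dV (vf_v Q) t x u v - (P + (Rpower (u ^ 2 + v ^ 2) (gamma / 2) + V1 t x) * u - V2 t x * v) * pd4 dV (vf_t Q) t x u v - (pd4 dX (vf_x Q) t x u v + p * pd4 dU (vf_x Q) t x u v + 2 * q * pd4 dV (vf_x Q) t x u v))) - s * (pd4 dX (vf_t Q) t x u v + p * pd4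 dU (vf_t Q) t x u v + q * pd4 dV (vf_t Q) t x u v) - Qq * (pd4 dX (vf_x Q) t x u v + p * pd4 dU (vf_x Q) t x u v + q * pd4 dV (vf_x Q) t x u v)) * 0.

Definition E2f (Q : vfield) (gamma : R) (V1 V2 : R -> R -> R) (t x u v p q P Qq r s : R) : R :=
  (vf_t Q) t x u v * (Derive (fun s0 => V1 s0 x) t * v + Derive (fun s0 => V2 s0 x) t * u) + (vf_x Q) t x u v * (Derive (fun s0 => V1 t s0) x * v + Derive (fun s0 => V2 t s0) x * u) + (vf_u Q) t x u v * (gamma * u * v * Rpower (u ^ 2 + v ^ 2) (gamma / 2) / (u ^ 2 + v ^ 2) + V2 t x) + (vf_v Q) t x u v * (Rpower (u ^ 2 + v ^ 2) (gamma / 2) + gamma * v ^ 2 * Rpower (u ^ 2 + v ^ 2) (gamma / 2) / (u ^ 2 + v ^ 2) + V1 t x) + ((pd4 dT (vf_u Q) t x u v + (- Qq - (Rpower (u ^ 2 + v ^ 2) (gamma / 2) + V1 t x) * v - V2 t x * u) * pd4 dU (vf_u Q) t x u v + (P + (Rpower (u ^ 2 + v ^ 2) (gamma / 2) + V1 t x) * u - V2 t x * v) * pd4 dV (vf_u Q) t x u v) - (- Qq - (Rpower (u ^ 2 + v ^ 2) (gamma / 2) + V1 t x) * v - V2 t x * u) * (pd4 dT (vf_t Q) t x u v + (- Qq - (Rpower (u ^ 2 + v ^ 2) (gamma / 2) + V1 t x) * v - V2 t x * u) * pd4 dU (vf_t Q) t x u v + (P + (Rpower (u ^ 2 + v ^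 2) (gamma / 2) + V1 t x) * u - V2 t x * v) * pd4 dV (vf_t Q) t x u v) - p * (pd4 dT (vf_x Q) t x u v + (- Qq - (Rpower (u ^ 2 + v ^ 2) (gamma / 2) + V1 t x) * v - V2 t x * u) * pd4 dU (vf_x Q) t x u v + (P + (Rpower (u ^ 2 + v ^ 2) (gamma / 2) + V1 t x) * u - V2 t x * v) * pd4 dV (vf_x Q) t x u v)) * 1 + ((pd4 dX (vf_u Q) t x u v + p * pd4 dU (vf_u Q) t x u v + q * pd4 dV (vf_u Q) t x u v) - (- Qq - (Rpower (u ^ 2 + v ^ 2) (gamma / 2) + V1 t x) * v - V2 t x * u) * (pd4 dX (vf_t Q) t x u v + p * pd4 dU (vf_t Q) t x u v + q * pd4 dV (vf_t Q) t x u v) - p * (pd4 dX (vf_x Q) t x u v + p * pd4 dU (vf_x Q) t x u v + q * pd4 dV (vf_x Q) t x u v)) * 0 + ((pd4 dT (vf_v Q) t x u v + (- Qq - (Rpower (u ^ 2 + v ^ 2) (gamma / 2) + V1 t x) * v - V2 t x * u) * pd4 dU (vf_v Q) t x u v + (P + (Rpower (u ^ 2 + v ^ 2) (gamma / 2) + V1 t x) * u - V2 t x * v) * pd4 dV (vf_v Q) t x u v) - (P + (Rpower (u ^ 2 + v ^ 2) (gamma / 2) + V1 t x) * u - V2 t x * v) * (pd4 dT (vf_t Q) t x u v + (- Qq - (Rpower (u ^ 2 + v ^ 2) (gamma / 2) + V1 t x) * v - V2 t x * u) * pd4 dU (vf_t Q) t x u v + (P + (Rpower (u ^ 2 + v ^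 2) (gamma / 2) + V1 t x) * u - V2 t x * v) * pd4 dV (vf_t Q) t x u v) - q * (pd4 dT (vf_x Q) t x u v + (- Qq - (Rpower (u ^ 2 + v ^ 2) (gamma / 2) + V1 t x) * v - V2 t x * u) * pd4 dU (vf_x Q) t x u v + (P + (Rpower (u ^ 2 + v ^ 2) (gamma / 2) + V1 t x) * u - V2 t x * v) * pd4 dV (vf_x Q) t x u v)) * 0 + ((pd4 dX (vf_v Q) t x u v + p * pd4 dU (vf_v Q) t x u v + q * pd4 dV (vf_v Q) t x u v) - (P + (Rpower (u ^ 2 + v ^ 2) (gamma / 2) + V1 t x) * u - V2 t x * v) * (pd4 dX (vf_t Q) t x u v + p * pd4 dU (vf_t Q) t x u v + q * pd4 dV (vf_t Q) t x u v) - q * (pd4 dX (vf_x Q) t x u v + p * pd4 dU (vf_x Q) t x u v + q * pd4 dV (vf_x Q) t x u v)) * 0 + (((pd4 dX (pd4 dX (vf_u Q)) t x u v + p * pd4 dX (pd4 dU (vf_u Q)) t x u v + q * pd4 dX (pd4 dV (vf_u Q)) t x u v - (- Qq - (Rpower (u ^ 2 + v ^ 2) (gamma / 2) + V1 t x) * v - V2 t x * u) * (pd4 dX (pd4 dX (vf_t Q)) t x u v + p * pd4 dX (pd4 dU (vf_t Q)) t x u v + q * pd4 dX (pd4 dV (vf_t Q)) t x u v) - p * (pd4 dX (pd4 dX (vf_x Q)) t x u v + p * pd4 dX (pd4 dU (vf_x Q)) t x u v + q * pd4 dX (pd4 dV (vf_x Q)) t x u v)) + p * (pd4 dU (pd4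 dX (vf_u Q)) t x u v + p * pd4 dU (pd4 dU (vf_u Q)) t x u v + q * pd4 dU (pd4 dV (vf_u Q)) t x u v - (- Qq - (Rpower (u ^ 2 + v ^ 2) (gamma / 2) + V1 t x) * v - V2 t x * u) * (pd4 dU (pd4 dX (vf_t Q)) t x u v + p * pd4 dU (pd4 dU (vf_t Q)) t x u v + q * pd4 dU (pd4 dV (vf_t Q)) t x u v) - p * (pd4 dU (pd4 dX (vf_x Q)) t x u v + p * pd4 dU (pd4 dU (vf_x Q)) t x u v + q * pd4 dU (pd4 dV (vf_x Q)) t x u v)) + q * (pd4 dV (pd4 dX (vf_u Q)) t x u v + p * pd4 dV (pd4 dU (vf_u Q)) t x u v + q * pd4 dV (pd4 dV (vf_u Q)) t x u v - (- Qq - (Rpower (u ^ 2 + v ^ 2) (gamma / 2) + V1 t x) * v - V2 t x * u) * (pd4 dV (pd4 dX (vf_t Q)) t x u v + p * pd4 dV (pd4 dU (vf_t Q)) t x u v + q * pd4 dV (pd4 dV (vf_t Q)) t x u v) - p * (pd4 dV (pd4 dX (vf_x Q)) t x u v + p * pd4 dV (pd4 dU (vf_x Q)) t x u v + q * pd4 dV (pd4 dV (vf_x Q)) t x u v)) + r * (- (pd4 dX (vf_t Q) t x u v + p * pd4 dU (vf_t Q) t x u v + q * pd4 dV (vf_t Q) t x u v)) + P * (pd4 dU (vf_u Q) t x u v - (- Qq - (Rpower (u ^ 2 + v ^ 2) (gamma / 2) + V1 t x) * v - V2 t x * u) * pd4 dU (vf_t Q) t x u v - (pd4 dX (vf_x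 Q) t x u v + 2 * p * pd4 dU (vf_x Q) t x u v + q * pd4 dV (vf_x Q) t x u v)) + s * 0 + Qq * (pd4 dV (vf_u Q) t x u v - (- Qq - (Rpower (u ^ 2 + v ^ 2) (gamma / 2) + V1 t x) * v - V2 t x * u) * pd4 dV (vf_t Q) t x u v - p * pd4 dV (vf_x Q) t x u v)) - r * (pd4 dX (vf_t Q) t x u v + p * pd4 dU (vf_t Q) t x u v + q * pd4 dV (vf_t Q) t x u v) - P * (pd4 dX (vf_x Q) t x u v + p * pd4 dU (vf_x Q) t x u v + q * pd4 dV (vf_x Q) t x u v)) * 0 + (((pd4 dX (pd4 dX (vf_v Q)) t x u v + p * pd4 dX (pd4 dU (vf_v Q)) t x u v + q * pd4 dX (pd4 dV (vf_v Q)) t x u v - (P + (Rpower (u ^ 2 + v ^ 2) (gamma / 2) + V1 t x) * u - V2 t x * v) * (pd4 dX (pd4 dX (vf_t Q)) t x u v + p * pd4 dX (pd4 dU (vf_t Q)) t x u v + q * pd4 dX (pd4 dV (vf_t Q)) t x u v) - q * (pd4 dX (pd4 dX (vf_x Q)) t x u v + p * pd4 dX (pd4 dU (vf_x Q)) t x u v + q * pd4 dX (pd4 dV (vf_x Q)) t x u v)) + p * (pd4 dU (pd4 dX (vf_v Q)) t x u v + p * pd4 dU (pd4 dU (vf_v Q)) t x u v + q * pd4 dU (pd4 dV (vf_v Q)) t x u v - (P + (Rpower (u ^ 2 + v ^ 2) (gamma / 2) + V1 t x) * u - V2 t x * v) * (pd4 dU (pd4 dX (vf_t Q)) t x u v +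 p * pd4 dU (pd4 dU (vf_t Q)) t x u v + q * pd4 dU (pd4 dV (vf_t Q)) t x u v) - q * (pd4 dU (pd4 dX (vf_x Q)) t x u v + p * pd4 dU (pd4 dU (vf_x Q)) t x u v + q * pd4 dU (pd4 dV (vf_x Q)) t x u v)) + q * (pd4 dV (pd4 dX (vf_v Q)) t x u v + p * pd4 dV (pd4 dU (vf_v Q)) t x u v + q * pd4 dV (pd4 dV (vf_v Q)) t x u v - (P + (Rpower (u ^ 2 + v ^ 2) (gamma / 2) + V1 t x) * u - V2 t x * v) * (pd4 dV (pd4 dX (vf_t Q)) t x u v + p * pd4 dV (pd4 dU (vf_t Q)) t x u v + q * pd4 dV (pd4 dV (vf_t Q)) t x u v) - q * (pd4 dV (pd4 dX (vf_x Q)) t x u v + p * pd4 dV (pd4 dU (vf_x Q)) t x u v + q * pd4 dV (pd4 dV (vf_x Q)) t x u v)) + r * 0 + P * (pd4 dU (vf_v Q) t x u v - (P + (Rpower (u ^ 2 + v ^ 2) (gamma / 2) + V1 t x) * u - V2 t x * v) * pd4 dU (vf_t Q) t x u v - q * pd4 dU (vf_x Q) t x u v) + s * (- (pd4 dX (vf_t Q) t x u v + p * pd4 dU (vf_t Q) t x u v + q * pd4 dV (vf_t Q) t x u v)) + Qq * (pd4 dV (vf_v Q) t x u v - (P + (Rpower (u ^ 2 + v ^ 2) (gamma / 2) + V1 t x) * u - V2 t x * v) * pd4 dV (vf_t Q) t x u v - (pd4 dX (vf_x Q) t x u v + p * pd4 dU (vf_x Q) t x u v + 2 * q * pd4 dV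 (vf_x Q) t x u v))) - s * (pd4 dX (vf_t Q) t x u v + p * pd4 dU (vf_t Q) t x u v + q * pd4 dV (vf_t Q) t x u v) - Qq * (pd4 dX (vf_x Q) t x u v + p * pd4 dU (vf_x Q) t x u v + q * pd4 dV (vf_x Q) t x u v)) * 1.

Lemma E1_exp Q gamma V1 V2 t x u v p q P Qq r s :
  sm (vf_t Q) -> sm (vf_x Q) -> sm (vf_u Q) -> sm (vf_v Q) -> smooth2 V1 -> smooth2 V2 ->
  0 < u ^ 2 + v ^ 2 ->
  prQ Q (Delta1 gamma V1 V2) (Jt Q gamma V1 V2 t x u v p q P Qq r s) = E1f Q gamma V1 V2 t x u v p q P Qq r s.
Proof.
  intros HT HX HU HV H1 H2 Hd.
  unfold prQ, pr_xx.
  rewrite pdcT_D1, pdcX_D1, pdcU_D1, pdcV_D1, pdcUt_D1, pdcUx_D1, pdcVt_D1, pdcVx_D1, pdcUxx_D1, pdcVxx_D1 by (try exact Hd; assumption).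
  rewrite TotDx_prxU, TotDx_prxV by (try exact Hd; assumption).
  rewrite !TotDx_lift, prtU, prtV, prxU, prxV.
  unfold E1f, absg, lift4. cbv beta iota delta [Jt]. ring.
Qed.

Lemma E2_exp Q gamma V1 V2 t x u v p q P Qq r s :
  sm (vf_t Q) -> sm (vf_x Q) -> sm (vf_u Q) -> sm (vf_v Q) -> smooth2 V1 -> smooth2 V2 ->
  0 < u ^ 2 + v ^ 2 ->
  prQ Q (Delta2 gamma V1 V2) (Jt Q gamma V1 V2 t x u v p q P Qq r s) = E2f Q gamma V1 V2 t x u v p q P Qq r s.
Proof.
  intros HT HX HU HV H1 H2 Hd.
  unfold prQ, pr_xx.
  rewrite pdcT_D2, pdcX_D2, pdcU_D2, pdcV_D2, pdcUt_D2, pdcUx_D2, pdcVt_D2, pdcVx_D2, pdcUxx_D2, pdcVxx_D2 by (try exact Hd; assumption).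
  rewrite TotDx_prxU, TotDx_prxV by (try exact Hd; assumption).
  rewrite !TotDx_lift, prtU, prtV, prxU, prxV.
  unfold E2f, absg, lift4. cbv beta iota delta [Jt]. ring.
Qed.


Lemma line_const (f : R -> R) : (forall y, ex_derive f y /\ Derive f y = 0) -> forall a b, f a = f b.
Proof.
  intros H a b.
  assert (K : forall y, is_derive f y 0).
  { intro y. destruct (H y) as [H1 H2]. rewrite <- H2. apply Derive_correct. exact H1. }
  destruct (Rtotal_order a b) as [Hab|[Hab|Hab]].
  - apply eq_is_derive; [intros; apply K | exact Hab].
  - subst; reflexivity.
  - symmetry. apply eq_is_derive; [intros; apply K | exact Hab].
Qed.

Lemma uv_const (h : R -> R -> R) :
  (forall u v, 0 < u ^ 2 + v ^ 2 -> ex_derive (fun s => h s v) u /\ Derive (fun s => h s v) u = 0) ->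
  (forall u v, 0 < u ^ 2 + v ^ 2 -> ex_derive (fun s => h u s) v /\ Derive (fun s => h u s) v = 0) ->
  forall u v, 0 < u ^ 2 + v ^ 2 -> h u v = h 1 0.
Proof.
  intros Hu Hv u v Hd.
  assert (Hor : forall v0, v0 <> 0 -> forall a b, h a v0 = h b v0).
  { intros v0 Hv0. apply (line_const (fun s => h s v0)). intro y. apply Hu.
    assert (0 < v0 * v0) by (destruct (Rtotal_order v0 0) as [?|[?|?]]; [nra|tauto|nra]); simpl; nra. }
  assert (Ver : forall u0, u0 <> 0 -> forall a b, h u0 a = h u0 b).
  { intros u0 Hu0. apply (line_const (fun s => h u0 s)). intro y. apply Hv.
    assert (0 < u0 * u0) by (destruct (Rtotal_order u0 0) as [?|[?|?]]; [nra|tauto|nra]); simpl; nra. }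
  destruct (Req_dec v 0) as [Hv0|Hv0].
  - subst v. assert (Hu0 : u <> 0) by (intro; subst; simpl in Hd; lra).
    rewrite (Ver u Hu0 0 1), (Hor 1 ltac:(lra) u 1), (Ver 1 ltac:(lra) 1 0). reflexivity.
  - rewrite (Hor v Hv0 u 1), (Ver 1 ltac:(lra) v 0). reflexivity.
Qed.

Lemma loc_dom u v : 0 < u ^ 2 + v ^ 2 -> locally u (fun s => 0 < s ^ 2 + v ^ 2).
Proof.
  intro H. destruct (Req_dec v 0) as [Hv|Hv].
  - subst v. assert (Hu : u <> 0) by (intro; subst; simpl in H; lra).
    assert (Ha : 0 < Rabs u) by (apply Rabs_pos_lt; exact Hu).
    exists (mkposreal _ Ha). intros y Hy. simpl in Hy.
    unfold ball in Hy; simpl in Hy; unfold AbsRing_ball, abs, minus, plus, opp in Hy; simpl in Hy.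
    assert (y <> 0). { intro; subst y. rewrite Rplus_0_l, Rabs_Ropp in Hy. lra. }
    assert (0 < y * y) by (destruct (Rtotal_order y 0) as [?|[?|?]]; [nra|tauto|nra]). simpl; nra.
  - exists (mkposreal _ Rlt_0_1). intros y _.
    assert (0 < v * v) by (destruct (Rtotal_order v 0) as [?|[?|?]]; [nra|tauto|nra]). simpl; nra.
Qed.

Lemma loc_dom' u v : 0 < u ^ 2 + v ^ 2 -> locally v (fun s => 0 < u ^ 2 + s ^ 2).
Proof.
  intro H. apply filter_imp with (fun s => 0 < s ^ 2 + u ^ 2).
  - intros; lra.
  - apply loc_dom; lra.
Qed.

Lemma pd_ext g h : (forall t x u v, 0 < u ^ 2 + v ^ 2 -> g t x u v = h t x u v) ->
  forall d t x u v, 0 < u ^ 2 + v ^ 2 -> pd4 d g t x u v = pd4 d h t x u v.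
Proof.
  intros H d t x u v Hd. destruct d; cbv beta iota delta [pd4].
  - apply Derive_ext; intro; apply H; exact Hd.
  - apply Derive_ext; intro; apply H; exact Hd.
  - apply Derive_ext_loc. apply filter_imp with (2 := loc_dom u v Hd). intros; apply H; assumption.
  - apply Derive_ext_loc. apply filter_imp with (2 := loc_dom' u v Hd). intros; apply H; assumption.
Qed.

Lemma pd_zero g : (forall t x u v, 0 < u ^ 2 + v ^ 2 -> g t x u v = 0) ->
  forall d t x u v, 0 < u ^ 2 + v ^ 2 -> pd4 d g t x u v = 0.
Proof.
  intros H d t x u v Hd. rewrite (pd_ext g (fun _ _ _ _ => 0) H d t x u v Hd).
  destruct d; cbv beta iota delta [pd4]; apply Derive_const.
Qed.

Lemma sm_exd f d t x u v : sm f -> 0 < u ^ 2 + v ^ 2 -> ex_pd4 d f t x u v.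
Proof. intros H Hd. apply (sm_ex0 f t x u v H Hd). Qed.

Lemma Rp1 y : Rpower 1 y = 1.
Proof. unfold Rpower. rewrite ln_1, Rmult_0_r. apply exp_0. Qed.
Lemma Rp4 y : Rpower 4 (y / 2) = Rpower 2 (y / 2) * Rpower 2 (y / 2).
Proof. rewrite Rpower_mult_distr by lra. f_equal. Qed.
Lemma Rp2 y : y <> 0 -> Rpower 2 (y / 2) * Rpower 2 (y / 2) <> 1.
Proof.
  intros Hy H. rewrite <- Rpower_plus in H. replace (y / 2 + y / 2) with y in H by field.
  unfold Rpower in H. rewrite <- exp_0 in H. apply exp_inv in H.
  assert (0 < ln 2). { rewrite <- ln_1. apply ln_increasing; lra. }
  apply Rmult_integral in H. destruct H; [auto| lra].
Qed.
Lemma Rp_pos x y : 0 < Rpower x y.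
Proof. unfold Rpower. apply exp_pos. Qed.

Lemma smooth1_opp f : smooth1 f -> smooth1 (fun s => - f s).
Proof.
  intros H n t. apply ex_derive_ext with (fun s => - Derive_n f n s).
  - intro s. symmetry. apply Derive_n_opp.
  - auto_derive. exact (H n t).
Qed.

Lemma sm_iter ds f : sm f -> sm (iter_pd4 ds f).
Proof. induction ds; simpl; [auto | intro H; apply sm_pd; auto]. Qed.

Lemma Dn_iter g x0 n s : Derive_n (fun s => g s x0 1 0) n s = iter_pd4 (repeat dT n) g s x0 1 0.
Proof.
  revert s; induction n; intro s; [reflexivity|].
  simpl. rewrite (Derive_ext _ _ _ IHn). reflexivity.
Qed.

Lemma smooth1_of g x0 : sm g -> smooth1 (fun s => g s x0 1 0).
Proof.
  intros H n t. apply ex_derive_ext with (fun s => iter_pd4 (repeat dT n) g s x0 1 0).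
  - intro s. symmetry. apply Dn_iter.
  - apply (sm_exd (iter_pd4 (repeat dT n) g) dT t x0 1 0 (sm_iter _ _ H)). simpl; lra.
Qed.

Lemma Dn1 f t : Derive_n f 1 t = Derive f t.
Proof. reflexivity. Qed.
Lemma Dn2 f t : Derive_n f 2 t = Derive (Derive f) t.
Proof. reflexivity. Qed.
Lemma Dn3 f t : Derive_n f 3 t = Derive (Derive (Derive f)) t.
Proof. reflexivity. Qed.

Section Main.
Variables (gamma : R) (V1 V2 : R -> R -> R) (Q : vfield).
Hypothesis Hg : gamma <> 0.
Hypothesis HV1 : smooth2 V1.
Hypothesis HV2 : smooth2 V2.
Hypothesis HT : sm (vf_t Q).
Hypothesis HX : sm (vf_x Q).
Hypothesis HU : sm (vf_u Q).
Hypothesis HV : sm (vf_v Q).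
Hypothesis HL : is_Lie_sym gamma V1 V2 Q.

Local Notation tau := (vf_t Q).
Local Notation xi := (vf_x Q).
Local Notation e1 := (vf_u Q).
Local Notation e2 := (vf_v Q).

Lemma Ez t x u v p q P Qq r s : 0 < u ^ 2 + v ^ 2 ->
  E1f Q gamma V1 V2 t x u v p q P Qq r s = 0 /\ E2f Q gamma V1 V2 t x u v p q P Qq r s = 0.
Proof.
  intro Hd. rewrite <- E1_exp, <- E2_exp by assumption.
  apply HL.
  - exact Hd.
  - unfold Delta1, absg, Jt. ring.
  - unfold Delta2, absg, Jt. ring.
Qed.

Lemma S1a t x u v p q : 0 < u ^ 2 + v ^ 2 ->
  pd4 dX tau t x u v + p * pd4 dU tau t x u v + q * pd4 dV tau t x u v = 0.
Proof.
  intro Hd.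
  destruct (Ez t x u v p q 0 0 1 0 Hd) as [h1 _].
  destruct (Ez t x u v p q 0 0 0 0 Hd) as [h0 _].
  unfold E1f in h1, h0. lra.
Qed.

Lemma S1 t x u v : 0 < u ^ 2 + v ^ 2 ->
  pd4 dX tau t x u v = 0 /\ pd4 dU tau t x u v = 0 /\ pd4 dV tau t x u v = 0.
Proof.
  intro Hd. pose proof (S1a t x u v 0 0 Hd). pose proof (S1a t x u v 1 0 Hd). pose proof (S1a t x u v 0 1 Hd).
  repeat split; lra.
Qed.

Lemma S1' a b t x u v : b <> dT -> 0 < u ^ 2 + v ^ 2 -> pd4 a (pd4 b tau) t x u v = 0.
Proof.
  intros Hb Hd. apply pd_zero; [|exact Hd]. intros t' x' u' v' Hd'.
  destruct (S1 t' x' u' v' Hd') as (h1 & h2 & h3). destruct b; [congruence|assumption..].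
Qed.

Definition Tf (t : R) := tau t 0 1 0.

Lemma S2 t x u v : 0 < u ^ 2 + v ^ 2 -> tau t x u v = Tf t.
Proof.
  intro Hd. unfold Tf.
  rewrite (uv_const (fun u v => tau t x u v)).
  - apply (line_const (fun s => tau t s 1 0)). intro y. split.
    + apply (sm_exd tau dX t y 1 0 HT). simpl; lra.
    + apply (S1 t y 1 0). simpl; lra.
  - intros u' v' H'. split; [apply (sm_exd tau dU t x u' v' HT H') | apply (S1 t x u' v' H')].
  - intros u' v' H'. split; [apply (sm_exd tau dV t x u' v' HT H') | apply (S1 t x u' v' H')].
  - exact Hd.
Qed.

Lemma S2t t x u v : 0 < u ^ 2 + v ^ 2 -> pd4 dT tau t x u v = Derive Tf t.
Proof. intro Hd. cbv beta iota delta [pd4]. apply Derive_ext. intro s. apply S2. exact Hd. Qed.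

Ltac ktau Hd h :=
  rewrite ?(S2 _ _ _ _ Hd), ?(S2t _ _ _ _ Hd), ?(proj1 (S1 _ _ _ _ Hd)), ?(proj1 (proj2 (S1 _ _ _ _ Hd))), ?(proj2 (proj2 (S1 _ _ _ _ Hd))) in h;
  rewrite ?(S1' dX dX _ _ _ _ ltac:(discriminate) Hd), ?(S1' dX dU _ _ _ _ ltac:(discriminate) Hd), ?(S1' dX dV _ _ _ _ ltac:(discriminate) Hd),
          ?(S1' dU dX _ _ _ _ ltac:(discriminate) Hd), ?(S1' dU dU _ _ _ _ ltac:(discriminate) Hd), ?(S1' dU dV _ _ _ _ ltac:(discriminate) Hd),
          ?(S1' dV dX _ _ _ _ ltac:(discriminate) Hd), ?(S1' dV dU _ _ _ _ ltac:(discriminate) Hd), ?(S1' dV dV _ _ _ _ ltac:(discriminate) Hd) in h.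

Lemma S3a t x u v p q : 0 < u ^ 2 + v ^ 2 ->
  pd4 dU e1 t x u v - pd4 dV e2 t x u v + Derive Tf t - 2 * pd4 dX xi t x u v
  - 3 * p * pd4 dU xi t x u v - q * pd4 dV xi t x u v = 0.
Proof.
  intro Hd.
  destruct (Ez t x u v p q 1 0 0 0 Hd) as [h1 _].
  destruct (Ez t x u v p q 0 0 0 0 Hd) as [h0 _].
  unfold E1f in h1, h0. ktau Hd h1. ktau Hd h0. lra.
Qed.

Lemma S3b t x u v p q : 0 < u ^ 2 + v ^ 2 ->
  pd4 dU e2 t x u v + pd4 dV e1 t x u v - q * pd4 dU xi t x u v - p * pd4 dV xi t x u v = 0.
Proof.
  intro Hd.
  destruct (Ez t x u v p q 0 1 0 0 Hd) as [h1 _].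
  destruct (Ez t x u v p q 0 0 0 0 Hd) as [h0 _].
  unfold E1f in h1, h0. ktau Hd h1. ktau Hd h0. lra.
Qed.

Lemma S3c t x u v p q : 0 < u ^ 2 + v ^ 2 ->
  pd4 dV e2 t x u v - pd4 dU e1 t x u v + Derive Tf t - 2 * pd4 dX xi t x u v
  - p * pd4 dU xi t x u v - 3 * q * pd4 dV xi t x u v = 0.
Proof.
  intro Hd.
  destruct (Ez t x u v p q 0 1 0 0 Hd) as [_ h1].
  destruct (Ez t x u v p q 0 0 0 0 Hd) as [_ h0].
  unfold E2f in h1, h0. ktau Hd h1. ktau Hd h0. lra.
Qed.

Lemma S3 t x u v : 0 < u ^ 2 + v ^ 2 ->
  pd4 dU xi t x u v = 0 /\ pd4 dV xi t x u v = 0 /\ 2 * pd4 dX xi t x u v = Derive Tf t /\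
  pd4 dU e1 t x u v = pd4 dV e2 t x u v /\ pd4 dV e1 t x u v = - pd4 dU e2 t x u v.
Proof.
  intro Hd.
  pose proof (S3a t x u v 0 0 Hd). pose proof (S3a t x u v 1 0 Hd). pose proof (S3a t x u v 0 1 Hd).
  pose proof (S3b t x u v 0 0 Hd). pose proof (S3c t x u v 0 0 Hd).
  repeat split; lra.
Qed.

Lemma line_const' (f : R -> R) : (forall y, is_derive f y 0) -> forall a b, f a = f b.
Proof.
  intros H. apply line_const. intro y. split.
  - eexists; apply H.
  - apply is_derive_unique, H.
Qed.

Definition chi (t : R) := xi t 0 1 0.

Lemma S4 t x u v : 0 < u ^ 2 + v ^ 2 -> xi t x u v = Derive Tf t * x / 2 + chi t.
Proof.
  intro Hd.
  rewrite (uv_const (fun u v => xi t x u v)).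
  - assert (K : forall y, xi t y 1 0 - Derive Tf t * y / 2 = xi t 0 1 0 - Derive Tf t * 0 / 2).
    { intro y. apply (line_const' (fun y => xi t y 1 0 - Derive Tf t * y / 2)). intro z.
      assert (Hz : 0 < 1 ^ 2 + 0 ^ 2) by (simpl; lra).
      destruct (S3 t z 1 0 Hz) as (_ & _ & H3 & _).
      assert (D : is_derive (fun y => xi t y 1 0 - Derive Tf t * y / 2) z (pd4 dX xi t z 1 0 - Derive Tf t / 2)).
      { auto_derive.
        + apply (sm_exd xi dX t z 1 0 HX Hz).
        + cbv beta iota delta [pd4]. field. }
      replace (pd4 dX xi t z 1 0 - Derive Tf t / 2) with 0 in D by lra. exact D. }
    unfold chi. specialize (K x). lra.
  - intros u' v' H'. split; [apply (sm_exd xi dU t x u' v' HX H') | apply (S3 t x u' v' H')].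
  - intros u' v' H'. split; [apply (sm_exd xi dV t x u' v' HX H') | apply (S3 t x u' v' H')].
  - exact Hd.
Qed.

Lemma ex_Tf1 t : ex_derive (Derive Tf) t.
Proof. apply (sm_exd (pd4 dT tau) dT t 0 1 0). apply sm_pd, HT. simpl; lra. Qed.
Lemma ex_chi t : ex_derive chi t.
Proof. apply (sm_exd xi dT t 0 1 0). apply HX. simpl; lra. Qed.

Lemma S4t t x u v : 0 < u ^ 2 + v ^ 2 ->
  pd4 dT xi t x u v = Derive (Derive Tf) t * x / 2 + Derive chi t.
Proof.
  intro Hd. cbv beta iota delta [pd4].
  rewrite (Derive_ext _ (fun s => Derive Tf s * x / 2 + chi s)) by (intro; apply S4; exact Hd).
  apply is_derive_unique. auto_derive.
  - split; [apply ex_Tf1 | split; [apply ex_chi | exact I]].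
  - change (fun x0 => Derive Tf x0) with (Derive Tf). change (fun x0 => chi x0) with chi. field.
Qed.

Lemma S4x t x u v : 0 < u ^ 2 + v ^ 2 -> pd4 dX xi t x u v = Derive Tf t / 2.
Proof. intro Hd. destruct (S3 t x u v Hd) as (_ & _ & H & _). lra. Qed.

Lemma S4' a b t x u v : a <> dT -> b <> dT -> 0 < u ^ 2 + v ^ 2 -> pd4 a (pd4 b xi) t x u v = 0.
Proof.
  intros Ha Hb Hd. destruct b; [congruence| | |].
  - rewrite (pd_ext (pd4 dX xi) (fun t _ _ _ => Derive Tf t / 2)) by (try exact Hd; intros; apply S4x; assumption).
    destruct a; [congruence| | |]; cbv beta iota delta [pd4]; apply Derive_const.
  - apply pd_zero; [|exact Hd]. intros. apply S3. assumption.
  - apply pd_zero; [|exact Hd]. intros. apply S3. assumption.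
Qed.

Ltac kxi Hd h :=
  rewrite ?(S4 _ _ _ _ Hd), ?(S4t _ _ _ _ Hd), ?(S4x _ _ _ _ Hd), ?(proj1 (S3 _ _ _ _ Hd)), ?(proj1 (proj2 (S3 _ _ _ _ Hd))) in h;
  rewrite ?(S4' dX dX _ _ _ _ ltac:(discriminate) ltac:(discriminate) Hd), ?(S4' dX dU _ _ _ _ ltac:(discriminate) ltac:(discriminate) Hd), ?(S4' dX dV _ _ _ _ ltac:(discriminate) ltac:(discriminate) Hd),
          ?(S4' dU dX _ _ _ _ ltac:(discriminate) ltac:(discriminate) Hd), ?(S4' dU dU _ _ _ _ ltac:(discriminate) ltac:(discriminate) Hd), ?(S4' dU dV _ _ _ _ ltac:(discriminate) ltac:(discriminate) Hd),
          ?(S4' dV dX _ _ _ _ ltac:(discriminate) ltac:(discriminate) Hd), ?(S4' dV dU _ _ _ _ ltac:(discriminate) ltac:(discriminate) Hd), ?(S4' dV dV _ _ _ _ ltac:(discriminate) ltac:(discriminate) Hd) in h.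

Lemma S5 t x u v : 0 < u ^ 2 + v ^ 2 ->
  pd4 dU (pd4 dU e1) t x u v = 0 /\ pd4 dV (pd4 dV e1) t x u v = 0 /\
  pd4 dU (pd4 dU e2) t x u v = 0 /\ pd4 dV (pd4 dV e2) t x u v = 0 /\
  pd4 dX (pd4 dV e1) t x u v + pd4 dV (pd4 dX e1) t x u v + (Derive (Derive Tf) t * x / 2 + Derive chi t) = 0.
Proof.
  intro Hd.
  destruct (Ez t x u v 1 0 0 0 0 0 Hd) as [h1 k1].
  destruct (Ez t x u v (-1) 0 0 0 0 0 Hd) as [h2 k2].
  destruct (Ez t x u v 0 0 0 0 0 0 Hd) as [h0 k0].
  destruct (Ez t x u v 0 1 0 0 0 0 Hd) as [h3 k3].
  destruct (Ez t x u v 0 (-1) 0 0 0 0 Hd) as [h4 k4].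
  unfold E1f in h0, h1, h2, h3, h4. unfold E2f in k0, k1, k2, k3, k4.
  ktau Hd h0. ktau Hd h1. ktau Hd h2. ktau Hd h3. ktau Hd h4.
  ktau Hd k0. ktau Hd k1. ktau Hd k2. ktau Hd k3. ktau Hd k4.
  kxi Hd h0. kxi Hd h1. kxi Hd h2. kxi Hd h3. kxi Hd h4.
  kxi Hd k0. kxi Hd k1. kxi Hd k2. kxi Hd k3. kxi Hd k4.
  repeat split; lra.
Qed.

Lemma isd0 f y : is_derive f y 0 -> ex_derive f y /\ Derive f y = 0.
Proof. intro H. split; [eexists; exact H | apply is_derive_unique; exact H]. Qed.

Definition alpha t x := pd4 dU e1 t x 1 0.
Definition bb t x := pd4 dV e1 t x 1 0.
Definition z1 t x := e1 t x 1 0 - alpha t x.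
Definition z2 t x := e2 t x 1 0 + bb t x.

Lemma dom10 : 0 < 1 ^ 2 + 0 ^ 2.
Proof. simpl; lra. Qed.

Lemma e1u t x u v : 0 < u ^ 2 + v ^ 2 -> pd4 dU e1 t x u v = alpha t x.
Proof.
  intro Hd. unfold alpha. apply (uv_const (fun u v => pd4 dU e1 t x u v)); [| |exact Hd].
  - intros u' v' H'. split; [apply (sm_exd (pd4 dU e1) dU t x u' v' (sm_pd _ _ HU) H') | apply (S5 t x u' v' H')].
  - intros u' v' H'. split; [apply (sm_exd (pd4 dU e1) dV t x u' v' (sm_pd _ _ HU) H') |].
    change (pd4 dV (pd4 dU e1) t x u' v' = 0).
    rewrite (pd_ext (pd4 dU e1) (pd4 dV e2)) by (try exact H'; intros; apply S3; assumption).
    apply (S5 t x u' v' H').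
Qed.

Lemma e1v t x u v : 0 < u ^ 2 + v ^ 2 -> pd4 dV e1 t x u v = bb t x.
Proof.
  intro Hd. unfold bb. apply (uv_const (fun u v => pd4 dV e1 t x u v)); [| |exact Hd].
  - intros u' v' H'. split; [apply (sm_exd (pd4 dV e1) dU t x u' v' (sm_pd _ _ HU) H') |].
    change (pd4 dU (pd4 dV e1) t x u' v' = 0).
    rewrite (pd_ext (pd4 dV e1) (fun t x u v => - pd4 dU e2 t x u v)) by (try exact H'; intros; apply S3; assumption).
    cbv beta iota delta [pd4]. rewrite Derive_opp. 
    change (- pd4 dU (pd4 dU e2) t x u' v' = 0). rewrite (proj1 (proj2 (proj2 (S5 t x u' v' H')))). lra.
  - intros u' v' H'. split; [apply (sm_exd (pd4 dV e1) dV t x u' v' (sm_pd _ _ HU) H') | apply (S5 t x u' v' H')].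
Qed.

Lemma e2u t x u v : 0 < u ^ 2 + v ^ 2 -> pd4 dU e2 t x u v = - bb t x.
Proof. intro Hd. rewrite <- (e1v t x u v Hd). destruct (S3 t x u v Hd) as (_&_&_&_&H). lra. Qed.
Lemma e2v t x u v : 0 < u ^ 2 + v ^ 2 -> pd4 dV e2 t x u v = alpha t x.
Proof. intro Hd. rewrite <- (e1u t x u v Hd). destruct (S3 t x u v Hd) as (_&_&_&H&_). lra. Qed.

Lemma e1rep t x u v : 0 < u ^ 2 + v ^ 2 -> e1 t x u v = alpha t x * u + bb t x * v + z1 t x.
Proof.
  intro Hd.
  assert (K : e1 t x u v - alpha t x * u - bb t x * v = e1 t x 1 0 - alpha t x * 1 - bb t x * 0).
  { apply (uv_const (fun u v => e1 t x u v - alpha t x * u - bb t x * v)); [| |exact Hd].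
    - intros u' v' H'. apply isd0.
      assert (D : is_derive (fun s => e1 t x s v' - alpha t x * s - bb t x * v') u' (pd4 dU e1 t x u' v' - alpha t x)).
      { auto_derive. apply (sm_exd e1 dU t x u' v' HU H'). cbv beta iota delta [pd4]. ring. }
      rewrite (e1u t x u' v' H') in D. replace (alpha t x - alpha t x) with 0 in D by ring. exact D.
    - intros u' v' H'. apply isd0.
      assert (D : is_derive (fun s => e1 t x u' s - alpha t x * u' - bb t x * s) v' (pd4 dV e1 t x u' v' - bb t x)).
      { auto_derive. apply (sm_exd e1 dV t x u' v' HU H'). cbv beta iota delta [pd4]. ring. }
      rewrite (e1v t x u' v' H') in D. replace (bb t x - bb t x) with 0 in D by ring. exact D. }
  unfold z1. lra.
Qed.

Lemma e2rep t x u v : 0 < u ^ 2 + v ^ 2 -> e2 t x u v = - bb t x * u + alpha t x * v + z2 t x.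
Proof.
  intro Hd.
  assert (K : e2 t x u v + bb t x * u - alpha t x * v = e2 t x 1 0 + bb t x * 1 - alpha t x * 0).
  { apply (uv_const (fun u v => e2 t x u v + bb t x * u - alpha t x * v)); [| |exact Hd].
    - intros u' v' H'. apply isd0.
      assert (D : is_derive (fun s => e2 t x s v' + bb t x * s - alpha t x * v') u' (pd4 dU e2 t x u' v' + bb t x)).
      { auto_derive. apply (sm_exd e2 dU t x u' v' HV H'). cbv beta iota delta [pd4]. ring. }
      rewrite (e2u t x u' v' H') in D. replace (- bb t x + bb t x) with 0 in D by ring. exact D.
    - intros u' v' H'. apply isd0.
      assert (D : is_derive (fun s => e2 t x u' s + bb t x * u' - alpha t x * s) v' (pd4 dV e2 t x u' v' - alpha t x)).
      { auto_derive. apply (sm_exd e2 dV t x u' v' HV H'). cbv beta iota delta [pd4]. ring. }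
      rewrite (e2v t x u' v' H') in D. replace (alpha t x - alpha t x) with 0 in D by ring. exact D. }
  unfold z2. lra.
Qed.

Definition dx (g : R -> R -> R) t x := Derive (fun s => g t s) x.
Definition dt (g : R -> R -> R) t x := Derive (fun s => g s x) t.

Lemma exAx t x : ex_derive (fun s => alpha t s) x.
Proof. apply (sm_exd (pd4 dU e1) dX t x 1 0 (sm_pd _ _ HU) dom10). Qed.
Lemma exAt t x : ex_derive (fun s => alpha s x) t.
Proof. apply (sm_exd (pd4 dU e1) dT t x 1 0 (sm_pd _ _ HU) dom10). Qed.
Lemma exBx t x : ex_derive (fun s => bb t s) x.
Proof. apply (sm_exd (pd4 dV e1) dX t x 1 0 (sm_pd _ _ HU) dom10). Qed.
Lemma exBt t x : ex_derive (fun s => bb s x) t.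
Proof. apply (sm_exd (pd4 dV e1) dT t x 1 0 (sm_pd _ _ HU) dom10). Qed.
Lemma exZ1x t x : ex_derive (fun s => z1 t s) x.
Proof. unfold z1. auto_derive. split; [apply (sm_exd e1 dX t x 1 0 HU dom10) | split; [apply exAx | exact I]]. Qed.
Lemma exZ2t t x : ex_derive (fun s => z2 s x) t.
Proof. unfold z2. auto_derive. split; [apply (sm_exd e2 dT t x 1 0 HV dom10) | split; [apply exBt | exact I]]. Qed.

Lemma e1x t x u v : 0 < u ^ 2 + v ^ 2 -> pd4 dX e1 t x u v = dx alpha t x * u + dx bb t x * v + dx z1 t x.
Proof.
  intro Hd. cbv beta iota delta [pd4]. rewrite (Derive_ext _ (fun s => alpha t s * u + bb t s * v + z1 t s)) by (intro; apply e1rep; exact Hd).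
  apply is_derive_unique. auto_derive.
  - split; [apply exAx|split; [apply exBx| split; [apply exZ1x|exact I]]].
  - unfold dx. ring.
Qed.

Lemma e2t t x u v : 0 < u ^ 2 + v ^ 2 -> pd4 dT e2 t x u v = - dt bb t x * u + dt alpha t x * v + dt z2 t x.
Proof.
  intro Hd. cbv beta iota delta [pd4]. rewrite (Derive_ext _ (fun s => - bb s x * u + alpha s x * v + z2 s x)) by (intro; apply e2rep; exact Hd).
  apply is_derive_unique. auto_derive.
  - split; [apply exBt|split; [apply exAt| split; [apply exZ2t|exact I]]].
  - unfold dt. ring.
Qed.

Lemma dxz1 t s : dx z1 t s = pd4 dX e1 t s 1 0 - pd4 dX (pd4 dU e1) t s 1 0.
Proof. unfold dx, z1. apply is_derive_unique. auto_derive.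
  - split; [apply (sm_exd e1 dX t s 1 0 HU dom10) | split; [apply exAx | exact I]].
  - cbv beta iota delta [pd4 alpha]. ring. Qed.

Lemma exZ1xx t x : ex_derive (fun s => dx z1 t s) x.
Proof.
  apply ex_derive_ext with (fun s => pd4 dX e1 t s 1 0 - pd4 dX (pd4 dU e1) t s 1 0).
  - intro s; symmetry; apply dxz1.
  - auto_derive. split; [apply (sm_exd (pd4 dX e1) dX t x 1 0 (sm_pd _ _ HU) dom10) | split; [apply (sm_exd (pd4 dX (pd4 dU e1)) dX t x 1 0 (sm_pd _ _ (sm_pd _ _ HU)) dom10) | exact I]].
Qed.

Lemma e1xx t x u v : 0 < u ^ 2 + v ^ 2 -> pd4 dX (pd4 dX e1) t x u v =
  Derive (fun s => dx alpha t s) x * u + Derive (fun s => dx bb t s) x * v + Derive (fun s => dx z1 t s) x.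
Proof.
  intro Hd. cbv beta iota delta [pd4].
  rewrite (Derive_ext _ (fun s => dx alpha t s * u + dx bb t s * v + dx z1 t s)) by (intro; apply e1x; exact Hd).
  apply is_derive_unique. auto_derive.
  - split; [apply (sm_exd (pd4 dX (pd4 dU e1)) dX t x 1 0 (sm_pd _ _ (sm_pd _ _ HU)) dom10)|].
    split; [apply (sm_exd (pd4 dX (pd4 dV e1)) dX t x 1 0 (sm_pd _ _ (sm_pd _ _ HU)) dom10)|].
    split; [apply exZ1xx | exact I].
  - ring.
Qed.

Lemma S6 t x : 2 * dx bb t x + (Derive (Derive Tf) t * x / 2 + Derive chi t) = 0.
Proof.
  destruct (S5 t x 1 0 dom10) as (_&_&_&_&H).
  rewrite (pd_ext (pd4 dV e1) (fun t x _ _ => bb t x)) in H by (try exact dom10; intros; apply e1v; assumption).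
  rewrite (pd_ext (pd4 dX e1) (fun t x u v => dx alpha t x * u + dx bb t x * v + dx z1 t x)) in H by (try exact dom10; intros; apply e1x; assumption).
  cbv beta iota delta [pd4] in H.
  assert (E : Derive (fun s => dx alpha t x * 1 + dx bb t x * s + dx z1 t x) 0 = dx bb t x).
  { apply is_derive_unique. auto_derive; [exact I | ring]. }
  rewrite E in H. unfold dx. unfold dx in H. lra.
Qed.

Definition lam t := - bb t 0.

Lemma S7 t x : bb t x = - (Derive (Derive Tf) t * x ^ 2 / 8 + Derive chi t * x / 2 + lam t).
Proof.
  assert (K : bb t x + Derive (Derive Tf) t * x ^ 2 / 8 + Derive chi t * x / 2
            = bb t 0 + Derive (Derive Tf) t * 0 ^ 2 / 8 + Derive chi t * 0 / 2).
  { apply (line_const' (fun y => bb t y + Derive (Derive Tf) t * y ^ 2 / 8 + Derive chi t * y / 2)).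
    intro y.
    assert (D : is_derive (fun y => bb t y + Derive (Derive Tf) t * y ^ 2 / 8 + Derive chi t * y / 2) y
                 (dx bb t y + (Derive (Derive Tf) t * y / 2 + Derive chi t) / 2)).
    { auto_derive; [apply exBx | unfold dx; field]. }
    pose proof (S6 t y).
    replace (dx bb t y + (Derive (Derive Tf) t * y / 2 + Derive chi t) / 2) with 0 in D by lra. exact D. }
  unfold lam. simpl in K. lra.
Qed.

Definition Xf t x := Derive Tf t * x / 2 + chi t.
Definition g1 t x := Tf t * Derive (fun s0 => V1 s0 x) t + Xf t x * Derive (fun s0 => V1 t s0) x
  + Derive Tf t * V1 t x + dt bb t x + Derive (fun s => dx alpha t s) x.
Definition g2 t x := - (Tf t * Derive (fun s0 => V2 s0 x) t + Xf t x * Derive (fun s0 => V2 t s0) x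
  + Derive Tf t * V2 t x) - dt alpha t x + Derive (fun s => dx bb t s) x.
Definition g0 t x := - dt z2 t x + Derive (fun s => dx z1 t s) x + z1 t x * V1 t x - z2 t x * V2 t x.
Definition Zf t x u v := Rpower (u ^ 2 + v ^ 2) (gamma / 2) *
  (u * (gamma * alpha t x + Derive Tf t) + z1 t x + gamma * u * (z1 t x * u + z2 t x * v) / (u ^ 2 + v ^ 2))
  + g0 t x + g1 t x * u + g2 t x * v.

Lemma Zlem t x u v : 0 < u ^ 2 + v ^ 2 -> Zf t x u v = 0.
Proof.
  intro Hd.
  destruct (Ez t x u v 0 0 0 0 0 0 Hd) as [h _].
  unfold E1f in h. ktau Hd h. kxi Hd h.
  rewrite (e1rep t x u v Hd), (e2rep t x u v Hd), (e1u t x u v Hd), (e1v t x u v Hd), (e2u t x u v Hd), (e2v t x u v Hd),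
    (e2t t x u v Hd), (e1xx t x u v Hd) in h.
  rewrite <- h. unfold Zf, g0, g1, g2, Xf. field. lra.
Qed.

Lemma S8 t x : gamma * alpha t x + Derive Tf t = 0 /\ z1 t x = 0 /\ z2 t x = 0 /\ g1 t x = 0 /\ g2 t x = 0.
Proof.
  pose proof (Rp2 gamma Hg) as Hs.
  pose proof (Rp_pos 2 (gamma / 2)) as Hp.
  set (s0 := Rpower 2 (gamma / 2)) in *.
  assert (P10 : (gamma * alpha t x + Derive Tf t) + (1 + gamma) * z1 t x + g0 t x + g1 t x = 0).
  { rewrite <- (Zlem t x 1 0 ltac:(simpl; lra)). unfold Zf. replace (1 ^ 2 + 0 ^ 2) with 1 by ring. rewrite Rp1. field. }
  assert (Pm10 : - (gamma * alpha t x + Derive Tf t) + (1 + gamma) * z1 t x + g0 t x - g1 t x = 0).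
  { rewrite <- (Zlem t x (-1) 0 ltac:(simpl; lra)). unfold Zf. replace ((-1) ^ 2 + 0 ^ 2) with 1 by ring. rewrite Rp1. field. }
  assert (P20 : s0 * s0 * (2 * (gamma * alpha t x + Derive Tf t) + (1 + gamma) * z1 t x) + g0 t x + 2 * g1 t x = 0).
  { rewrite <- (Zlem t x 2 0 ltac:(simpl; lra)). unfold Zf. replace (2 ^ 2 + 0 ^ 2) with 4 by ring. rewrite Rp4. fold s0. field. }
  assert (Pm20 : s0 * s0 * (-2 * (gamma * alpha t x + Derive Tf t) + (1 + gamma) * z1 t x) + g0 t x - 2 * g1 t x = 0).
  { rewrite <- (Zlem t x (-2) 0 ltac:(simpl; lra)). unfold Zf. replace ((-2) ^ 2 + 0 ^ 2) with 4 by ring. rewrite Rp4. fold s0. field. }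
  assert (P01 : z1 t x + g0 t x + g2 t x = 0).
  { rewrite <- (Zlem t x 0 1 ltac:(simpl; lra)). unfold Zf. replace (0 ^ 2 + 1 ^ 2) with 1 by ring. rewrite Rp1. field. }
  assert (P0m1 : z1 t x + g0 t x - g2 t x = 0).
  { rewrite <- (Zlem t x 0 (-1) ltac:(simpl; lra)). unfold Zf. replace (0 ^ 2 + (-1) ^ 2) with 1 by ring. rewrite Rp1. field. }
  assert (P02 : s0 * s0 * z1 t x + g0 t x + 2 * g2 t x = 0).
  { rewrite <- (Zlem t x 0 2 ltac:(simpl; lra)). unfold Zf. replace (0 ^ 2 + 2 ^ 2) with 4 by ring. rewrite Rp4. fold s0. field. }
  assert (P0m2 : s0 * s0 * z1 t x + g0 t x - 2 * g2 t x = 0).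
  { rewrite <- (Zlem t x 0 (-2) ltac:(simpl; lra)). unfold Zf. replace (0 ^ 2 + (-2) ^ 2) with 4 by ring. rewrite Rp4. fold s0. field. }
  assert (P11 : s0 * ((gamma * alpha t x + Derive Tf t) + z1 t x + gamma * (z1 t x + z2 t x) / 2) + g0 t x + g1 t x + g2 t x = 0).
  { rewrite <- (Zlem t x 1 1 ltac:(simpl; lra)). unfold Zf. replace (1 ^ 2 + 1 ^ 2) with 2 by ring. fold s0. field. }
  assert (Hc : (s0 * s0 - 1) * (gamma * alpha t x + Derive Tf t) = 0) by lra.
  apply Rmult_integral in Hc. destruct Hc as [Hc|Hc]; [exfalso; apply Hs; lra|].
  assert (Hz : (s0 * s0 - 1) * z1 t x = 0) by lra.
  apply Rmult_integral in Hz. destruct Hz as [Hz|Hz]; [exfalso; apply Hs; lra|].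
  assert (Hg1 : g1 t x = 0) by lra.
  assert (Hg2 : g2 t x = 0) by lra.
  assert (Hg0 : g0 t x = 0) by lra.
  assert (Hz2 : (s0 * gamma) * z2 t x = 0).
  { rewrite Hc, Hz, Hg0, Hg1, Hg2 in P11. lra. }
  apply Rmult_integral in Hz2. destruct Hz2 as [Hz2|Hz2].
  - apply Rmult_integral in Hz2. destruct Hz2; [lra | congruence].
  - repeat split; assumption.
Qed.

Lemma alpha_eq t x : alpha t x = - Derive Tf t / gamma.
Proof. destruct (S8 t x) as (H & _). field_simplify_eq; [lra | exact Hg]. Qed.

Lemma ex_Tf2 t : ex_derive (Derive (Derive Tf)) t.
Proof. apply (sm_exd (pd4 dT (pd4 dT tau)) dT t 0 1 0). apply sm_pd, sm_pd, HT. simpl; lra. Qed.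
Lemma ex_chi1 t : ex_derive (Derive chi) t.
Proof. apply (sm_exd (pd4 dT xi) dT t 0 1 0). apply sm_pd, HX. simpl; lra. Qed.
Lemma ex_lam t : ex_derive lam t.
Proof. unfold lam. auto_derive. apply (exBt t 0). Qed.

Lemma main :
  exists xi0 chi0 lam0 : R -> R,
    smooth1 xi0 /\ smooth1 chi0 /\ smooth1 lam0 /\
    (forall t x u v, dom4 t x u v ->
       vf_t Q t x u v = vf_t (DGM gamma xi0 chi0 lam0) t x u v /\
       vf_x Q t x u v = vf_x (DGM gamma xi0 chi0 lam0) t x u v /\
       vf_u Q t x u v = vf_u (DGM gamma xi0 chi0 lam0) t x u v /\
       vf_v Q t x u v = vf_v (DGM gamma xi0 chi0 lam0) t x u v) /\
    (forall t x : R,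
       xi0 t * Derive (fun s => V1 s x) t
       + (/ 2 * Derive_n xi0 1 t * x + chi0 t) * Derive (fun s => V1 t s) x
       + Derive_n xi0 1 t * V1 t x
       = / 8 * Derive_n xi0 3 t * x ^ 2 + / 2 * Derive_n chi0 2 t * x
         + Derive_n lam0 1 t /\
       xi0 t * Derive (fun s => V2 s x) t
       + (/ 2 * Derive_n xi0 1 t * x + chi0 t) * Derive (fun s => V2 t s) x
       + Derive_n xi0 1 t * V2 t x
       = (4 - gamma) / gamma / 4 * Derive_n xi0 2 t).
Proof.
  exists Tf, chi, lam.
  split; [apply (smooth1_of tau 0 HT)|].
  split; [apply (smooth1_of xi 0 HX)|].
  split; [apply smooth1_opp, (smooth1_of (pd4 dV e1) 0 (sm_pd _ _ HU))|].
  split.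
  - intros t x u v Hd. unfold dom4 in Hd. unfold DGM; cbn [vf_t vf_x vf_u vf_v]. rewrite ?Dn1, ?Dn2.
    rewrite (S2 t x u v Hd), (S4 t x u v Hd), (e1rep t x u v Hd), (e2rep t x u v Hd), (S7 t x), (alpha_eq t x).
    destruct (S8 t x) as (_ & Hz1 & Hz2 & _). rewrite Hz1, Hz2.
    repeat split; try field; exact Hg.
  - intros t x. destruct (S8 t x) as (_ & _ & _ & G1 & G2).
    unfold g1, g2, Xf in *. rewrite ?Dn1, ?Dn2, ?Dn3.
    assert (E1 : dt bb t x = - (Derive (Derive (Derive Tf)) t * x ^ 2 / 8 + Derive (Derive chi) t * x / 2 + Derive lam t)).
    { unfold dt. rewrite (Derive_ext _ (fun s => - (Derive (Derive Tf) s * x ^ 2 / 8 + Derive chi s * x / 2 + lam s)))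
        by (intro; apply S7).
      apply is_derive_unique. auto_derive.
      - split; [apply ex_Tf2 | split; [apply ex_chi1 | split; [apply ex_lam | exact I]]].
      - change (fun x0 => Derive (Derive Tf) x0) with (Derive (Derive Tf)).
        change (fun x0 => Derive chi x0) with (Derive chi). change (fun x0 => lam x0) with lam. field. }
    assert (E2 : Derive (fun s => dx alpha t s) x = 0).
    { rewrite (Derive_ext _ (fun s => 0)). apply Derive_const.
      intro s. unfold dx. rewrite (Derive_ext _ (fun _ => - Derive Tf t / gamma)) by (intro; apply alpha_eq). apply Derive_const. }
    assert (E3 : dt alpha t x = - Derive (Derive Tf) t / gamma).
    { unfold dt. rewrite (Derive_ext _ (fun s => - Derive Tf s / gamma)) by (intro; apply alpha_eq).
      apply is_derive_unique. auto_derive; [apply ex_Tf1|].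
      change (fun x0 => Derive Tf x0) with (Derive Tf). field. exact Hg. }
    assert (E4 : Derive (fun s => dx bb t s) x = - Derive (Derive Tf) t / 4).
    { rewrite (Derive_ext _ (fun s => - (Derive (Derive Tf) t * s / 4 + Derive chi t / 2))).
      - apply is_derive_unique. auto_derive; try exact I; field.
      - intro s. unfold dx. rewrite (Derive_ext _ (fun y => - (Derive (Derive Tf) t * y ^ 2 / 8 + Derive chi t * y / 2 + lam t)))
          by (intro; apply S7).
        apply is_derive_unique. auto_derive; try exact I; field. }
    rewrite E1, E2 in G1. rewrite E3, E4 in G2.
    split.
    + lra.
    + assert (Hr : (4 - gamma) / gamma / 4 * Derive (Derive Tf) t = Derive (Derive Tf) t / gamma - Derive (Derive Tf) t / 4) by (field; exact Hg). rewrite Hr. lra.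
Qed.

End Main.

Theorem theorem1 (gamma : R) (V1 V2 : R -> R -> R) (Q : vfield) :
  gamma <> 0 -> smooth2 V1 -> smooth2 V2 ->
  in_Amax gamma V1 V2 Q ->
  exists xi chi lam : R -> R,
    smooth1 xi /\ smooth1 chi /\ smooth1 lam /\
    (forall t x u v, dom4 t x u v ->
       vf_t Q t x u v = vf_t (DGM gamma xi chi lam) t x u v /\
       vf_x Q t x u v = vf_x (DGM gamma xi chi lam) t x u v /\
       vf_u Q t x u v = vf_u (DGM gamma xi chi lam) t x u v /\
       vf_v Q t x u v = vf_v (DGM gamma xi chi lam) t x u v) /\
    (forall t x : R,
       xi t * Derive (fun s => V1 s x) t
       + (/ 2 * Derive_n xi 1 t * x + chi t) * Derive (fun s => V1 t s) x
       + Derive_n xi 1 t * V1 t x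
       = / 8 * Derive_n xi 3 t * x ^ 2 + / 2 * Derive_n chi 2 t * x
         + Derive_n lam 1 t /\
       xi t * Derive (fun s => V2 s x) t
       + (/ 2 * Derive_n xi 1 t * x + chi t) * Derive (fun s => V2 t s) x
       + Derive_n xi 1 t * V2 t x
       = (4 - gamma) / gamma / 4 * Derive_n xi 2 t).
Proof.
  intros Hg H1 H2 (HT & HX & HU & HV & HL).
  eapply main; eassumption.
Qed.
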